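(* Suppose $f$ is an infinitely renormalizable $\mathcal C^3$ dissipative gap mapping. Then for every $\varepsilon>0$ there is $n_0\in\mathbb N$ such that for all $n\ge n_0$ there exists an affine gap mapping $g_n$ (both branches affine) with $\|\mathcal R^nf-g_n\|_{\mathcal C^3}\le\varepsilon$.
   Context: A dissipative gap map is a map $f:[a_L,a_R]\setminus\{0\}\to[a_L,a_R]$, $a_L<0<a_R$, continuous and strictly increasing on $[a_L,0)$ and $(0,a_R]$, with $f(0^-)=a_R$, $f(0^+)=a_L$, $f(a_L)>f(a_R)$, differentiable with $0<f'\le\nu<1$. With domain $[b-1,b]$, branches $f_L,f_R$ and gap $G=(f_R(b),f_L(b-1))$, $f$ is renormalizable if there is a minimal $k\ge1$ with $0\notin\bigcup_{i=0}^k\overline{f^i(G)}$ and either $\overline G,\dots,\overline{f^{k-1}(G)}\subset(b-1,0)$, $\overline{f^k(G)}\subset(0,b)$, or the same with sides exchanged. With $0^+_j=f^{j-1}(b-1)$, $0^-_j=f^{j-1}(b)$, $I'=[0^+_{k+1},0^-_{k+2}]$ in the first case and $I'=[0^+_{k+2},0^-_{k+1}]$ in the second; the renormalization is $\mathcal Rf(x)=R(|I'|x)/|I'|$ where $R$ is the first return map of $f$ to $I'$ (again a dissipative gap map). $f$ is infinitely renormalizable if $\mathcal R^nf$ is defined for all $n$. *)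

(* Defs.v *)
From Stdlib Require Import Reals Lra.
From Coquelicot Require Import Coquelicot.
Open Scope R_scope.

Fixpoint iterf (n : nat) (f : R -> R) (x : R) : R :=
  match n with O => x | S m => f (iterf m f x) end.

Definition C3 (H : R -> R) : Prop :=
  (forall (k : nat) (x : R), (k <= 3)%nat -> ex_derive_n H k x) /\
  (forall x : R, continuous (Derive_n H 3) x).

Definition in_closure (S : R -> Prop) (x : R) : Prop :=
  forall eps : R, 0 < eps -> exists y, S y /\ Rabs (y - x) < eps.

Definition cont_within (D : R -> Prop) (f : R -> R) (x : R) : Prop :=
  forall eps : R, 0 < eps -> exists delta : R, 0 < delta /\
    forall y, D y -> Rabs (y - x) < delta -> Rabs (f y - f x) < eps.

Definition left_branch (b x : R) : Prop := b - 1 <= x < 0.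
Definition right_branch (b x : R) : Prop := 0 < x <= b.

(* A gap map with domain [b-1,b] \ {0} (only values on that set matter). *)
Definition gap_map (f : R -> R) (b : R) : Prop :=
  0 < b < 1 /\
  (forall x, left_branch b x -> cont_within (left_branch b) f x) /\
  (forall x, right_branch b x -> cont_within (right_branch b) f x) /\
  (forall x y, left_branch b x -> left_branch b y -> x < y -> f x < f y) /\
  (forall x y, right_branch b x -> right_branch b y -> x < y -> f x < f y) /\
  filterlim f (at_left 0) (locally b) /\
  filterlim f (at_right 0) (locally (b - 1)) /\
  f b < f (b - 1) /\
  (forall x, b - 1 <= x <= b -> x <> 0 -> b - 1 <= f x <= b).

Definition affine_gap_map (g : R -> R) (b : R) : Prop :=
  gap_map g b /\
  exists sL cL sR cR : R,
    (forall x, left_branch b x -> g x = sL * x + cL) /\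
    (forall x, right_branch b x -> g x = sR * x + cR).

(* C^3 dissipative gap map on [b-1,b]: the branches are C^3 on the closed
   intervals [b-1,0] and [0,b] (expressed as restrictions of C^3 functions
   FL, FR on R), with 0 < f' <= nu < 1. *)
Definition C3_dissipative_gap_map (f : R -> R) (b : R) : Prop :=
  gap_map f b /\
  exists FL FR : R -> R,
    C3 FL /\ C3 FR /\
    (forall x, left_branch b x -> f x = FL x) /\
    (forall x, right_branch b x -> f x = FR x) /\
    exists nu : R, nu < 1 /\
      (forall x, left_branch b x -> 0 < Derive FL x <= nu) /\
      (forall x, right_branch b x -> 0 < Derive FR x <= nu).

Definition gap_image (f : R -> R) (b : R) (i : nat) (y : R) : Prop :=
  exists x, f b < x < f (b - 1) /\ y = iterf i f x.

Definition gap_cl_in (f : R -> R) (b : R) (i : nat) (lo hi : R) : Prop :=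
  forall y, in_closure (gap_image f b i) y -> lo < y < hi.

(* Renormalization combinatorics with return time k:
   left = true : cl G,...,cl f^(k-1) G in (b-1,0), cl f^k G in (0,b);
   left = false: the same with the sides exchanged.
   (0 notin cl f^i G for i <= k follows.) *)
Definition renorm_type (f : R -> R) (b : R) (k : nat) (left : bool) : Prop :=
  (1 <= k)%nat /\
  if left then
    (forall i, (i < k)%nat -> gap_cl_in f b i (b - 1) 0) /\ gap_cl_in f b k 0 b
  else
    (forall i, (i < k)%nat -> gap_cl_in f b i 0 b) /\ gap_cl_in f b k (b - 1) 0.

Definition renormalizable_with (f : R -> R) (b : R) (k : nat) (left : bool) : Prop :=
  renorm_type f b k left /\
  (forall k' l', (k' < k)%nat -> ~ renorm_type f b k' l').

(* 0^+_j = f^(j-1)(b-1), 0^-_j = f^(j-1)(b); endpoints of I' *)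
Definition Iprime_lo (f : R -> R) (b : R) (k : nat) (left : bool) : R :=
  if left then iterf k f (b - 1) else iterf (S k) f (b - 1).
Definition Iprime_hi (f : R -> R) (b : R) (k : nat) (left : bool) : R :=
  if left then iterf (S k) f b else iterf k f b.

(* g on [b'-1,b'] is the renormalization R f of f: g(x) = R(|I'| x)/|I'|
   where R is the first return map of f to I'. *)
Definition is_renormalization (f : R -> R) (b : R) (g : R -> R) (b' : R) : Prop :=
  exists (k : nat) (left : bool),
    renormalizable_with f b k left /\
    let lo := Iprime_lo f b k left in
    let hi := Iprime_hi f b k left in
    let L := hi - lo in
    (lo < hi) /\
    b' = hi / L /\
    forall x, b' - 1 <= x <= b' -> x <> 0 ->
      exists r : nat, (1 <= r)%nat /\
        lo <= iterf r f (L * x) <= hi /\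
        (forall j, (1 <= j)%nat -> (j < r)%nat ->
            ~ (lo <= iterf j f (L * x) <= hi)) /\
        g x = iterf r f (L * x) / L.

(* ||f - g||_{C^3} <= eps on the branches [b-1,0) and (0,b] (max over
   derivatives of order 0..3 of the sup norm on the closed branches). *)
Definition C3_dist_le (f g : R -> R) (b eps : R) : Prop :=
  exists HL HR : R -> R,
    C3 HL /\ C3 HR /\
    (forall x, left_branch b x -> HL x = f x - g x) /\
    (forall x, right_branch b x -> HR x = f x - g x) /\
    (forall (j : nat) x, (j <= 3)%nat -> b - 1 <= x <= 0 -> Rabs (Derive_n HL j x) <= eps) /\
    (forall (j : nat) x, (j <= 3)%nat -> 0 <= x <= b -> Rabs (Derive_n HR j x) <= eps).

(* Main.v *)
Require Import Defs.
From Stdlib Require Import Reals Lra Lia.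
From Coquelicot Require Import Coquelicot.
Open Scope R_scope.

Lemma dcomp (f g : R -> R) x df dg :
  is_derive f (g x) df -> is_derive g x dg -> is_derive (fun y => f (g y)) x (df * dg).
Proof. intros H1 H2. rewrite Rmult_comm. exact (is_derive_comp f g x df dg H1 H2). Qed.
Lemma dmult (f g : R -> R) x df dg :
  is_derive f x df -> is_derive g x dg -> is_derive (fun y => f y * g y) x (df * g x + f x * dg).
Proof. intros H1 H2. exact (is_derive_mult f g x df dg H1 H2 Rmult_comm). Qed.
Lemma dplus (f g : R -> R) x df dg :
  is_derive f x df -> is_derive g x dg -> is_derive (fun y => f y + g y) x (df + dg).
Proof. intros H1 H2. exact (is_derive_plus f g x df dg H1 H2). Qed.
Lemma dconst (a x : R) : is_derive (fun _ => a) x 0.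
Proof. exact (is_derive_const a x). Qed.
Lemma did (x : R) : is_derive (fun y => y) x 1.
Proof. exact (is_derive_id x). Qed.
Lemma dext (f g : R -> R) x l l' : (forall t, f t = g t) -> l = l' -> is_derive f x l -> is_derive g x l'.
Proof. intros H -> H2. exact (is_derive_ext f g x l' H H2). Qed.
Lemma cmult (f g : R -> R) x : continuous f x -> continuous g x -> continuous (fun y => f y * g y) x.
Proof. intros; apply (continuous_mult f g); auto. Qed.
Lemma cplus (f g : R -> R) x : continuous f x -> continuous g x -> continuous (fun y => f y + g y) x.
Proof. intros; apply (continuous_plus f g); auto. Qed.
Lemma ccomp (f g : R -> R) x : continuous g x -> continuous f (g x) -> continuous (fun y => f (g y)) x.
Proof. intros; apply (continuous_comp g f); auto. Qed.
Lemma cconst (a x : R) : continuous (fun _ => a) x.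
Proof. apply continuous_const. Qed.
Lemma cid (x : R) : continuous (fun y => y) x.
Proof. apply continuous_id. Qed.
Lemma dcont (f : R -> R) x l : is_derive f x l -> continuous f x.
Proof. intros H. apply (ex_derive_continuous (V:=R_NormedModule)). exists l. exact H. Qed.

Record sm := mksm { s0 : R -> R; s1 : R -> R; s2 : R -> R; s3 : R -> R }.
Definition Smooth (s : sm) : Prop :=
  (forall x, is_derive (s0 s) x (s1 s x)) /\ (forall x, is_derive (s1 s) x (s2 s x)) /\
  (forall x, is_derive (s2 s) x (s3 s x)) /\ (forall x, continuous (s3 s) x).

Definition scomp (h p : sm) : sm := mksm
  (fun x => s0 h (s0 p x))
  (fun x => s1 h (s0 p x) * s1 p x)
  (fun x => s2 h (s0 p x) * (s1 p x * s1 p x) + s1 h (s0 p x) * s2 p x)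
  (fun x => s3 h (s0 p x) * (s1 p x * (s1 p x * s1 p x)) + 3 * (s2 h (s0 p x) * (s1 p x * s2 p x))
            + s1 h (s0 p x) * s3 p x).

Definition sid : sm := mksm (fun x => x) (fun _ => 1) (fun _ => 0) (fun _ => 0).

Lemma Smooth_sid : Smooth sid.
Proof.
  unfold Smooth, sid; simpl. split; [|split; [|split]]; intro x.
  apply did. apply dconst. apply dconst. apply cconst.
Qed.

Lemma Smooth_comp h p : Smooth h -> Smooth p -> Smooth (scomp h p).
Proof.
  intros (h1 & h2 & h3 & h4) (p1 & p2 & p3 & p4). unfold Smooth, scomp; simpl. split; [|split; [|split]]; intro x.
  - apply dcomp; auto.
  - eapply dext; [intro; reflexivity| |].
    2:{ apply dmult; [apply dcomp; auto| auto]. }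
    simpl. ring.
  - eapply dext; [intro; reflexivity| |].
    2:{ apply dplus; apply dmult.
        apply dcomp; auto. apply dmult; auto. apply dcomp; auto. auto. }
    simpl. ring.
  - repeat (apply cplus || apply cmult); try apply cconst;
    try (apply ccomp; [apply (dcont _ _ _ (p1 x)) | ]);
    try apply (dcont _ _ _ (p1 x)); try apply (dcont _ _ _ (p2 x)); try apply (dcont _ _ _ (p3 x));
    try apply h4; try apply p4; try apply (dcont _ _ _ (h2 _)); try apply (dcont _ _ _ (h3 _)).
Qed.

Lemma Smooth_D1 s : Smooth s -> forall x, Derive_n (s0 s) 1 x = s1 s x.
Proof. intros (H1 & _) x. simpl. apply is_derive_unique. apply H1. Qed.
Lemma Smooth_D2 s : Smooth s -> forall x, Derive_n (s0 s) 2 x = s2 s x.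
Proof.
  intros Hs x. pose proof (Smooth_D1 s Hs) as E. destruct Hs as (H1 & H2 & _).
  change (Derive (Derive_n (s0 s) 1) x = s2 s x).
  rewrite (Derive_ext _ (s1 s) x E). apply is_derive_unique. apply H2.
Qed.
Lemma Smooth_D3 s : Smooth s -> forall x, Derive_n (s0 s) 3 x = s3 s x.
Proof.
  intros Hs x. pose proof (Smooth_D2 s Hs) as E. destruct Hs as (H1 & H2 & H3 & _).
  change (Derive (Derive_n (s0 s) 2) x = s3 s x).
  rewrite (Derive_ext _ (s2 s) x E). apply is_derive_unique. apply H3.
Qed.
Lemma Smooth_C3 s : Smooth s -> C3 (s0 s).
Proof.
  intros Hs. pose proof (Smooth_D1 s Hs) as E1. pose proof (Smooth_D2 s Hs) as E2.
  pose proof (Smooth_D3 s Hs) as E3.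
  destruct Hs as (H1 & H2 & H3 & H4). split.
  - intros k x Hk. destruct k as [|[|[|[|k]]]]; simpl; try exact I.
    + exists (s1 s x). apply H1.
    + exists (s2 s x). apply (is_derive_ext (s1 s)). intro t. symmetry. apply E1. apply H2.
    + exists (s3 s x). apply (is_derive_ext (s2 s)). intro t. symmetry. apply E2. apply H3.
    + exfalso. lia.
  - intro x. apply (continuous_ext (s3 s)). intro t. symmetry. apply E3. apply H4.
Qed.

Definition of_C3 (H : R -> R) : sm := mksm H (Derive_n H 1) (Derive_n H 2) (Derive_n H 3).
Lemma Smooth_of_C3 H : C3 H -> Smooth (of_C3 H).
Proof.
  intros [Hd Hc]. unfold Smooth, of_C3; simpl. split; [|split; [|split]]; intro x.
  - destruct (Hd 1%nat x ltac:(lia)) as [l Hl]. simpl in Hl.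
    pose proof (is_derive_unique _ _ _ Hl). unfold Derive_n. rewrite H0. exact Hl.
  - destruct (Hd 2%nat x ltac:(lia)) as [l Hl]. change (is_derive (Derive_n H 1) x l) in Hl.
    pose proof (is_derive_unique _ _ _ Hl). change (is_derive (Derive_n H 1) x (Derive (Derive_n H 1) x)).
    rewrite H0. exact Hl.
  - destruct (Hd 3%nat x ltac:(lia)) as [l Hl]. change (is_derive (Derive_n H 2) x l) in Hl.
    pose proof (is_derive_unique _ _ _ Hl). change (is_derive (Derive_n H 2) x (Derive (Derive_n H 2) x)).
    rewrite H0. exact Hl.
  - apply Hc.
Qed.

Lemma mle a b A B : 0 <= a -> a <= A -> 0 <= b -> b <= B -> a * b <= A * B.
Proof. intros; apply Rmult_le_compat; auto. Qed.

Definition Bnd (s : sm) (P : R -> Prop) (nu A T : R) : Prop :=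
  forall x, P x -> Rabs (s1 s x) <= nu /\ Rabs (s2 s x) <= A /\ Rabs (s3 s x) <= T.

Lemma Bnd_comp_gen h p (S P : R -> Prop) nu A T c :
  0 <= nu <= 1 -> 0 <= A -> 0 <= T -> 1 <= c -> 1 <= c * (1 - nu) ->
  Bnd h S nu A T -> (forall x, P x -> S (s0 p x)) ->
  Bnd p P 1 (c * A) (c * (T + 3 * c * A * A)) ->
  Bnd (scomp h p) P nu (c * A) (c * (T + 3 * c * A * A)).
Proof.
  intros Hnu HA HT Hc Hc2 Hh HS Hp x Px.
  destruct (Hh _ (HS x Px)) as (a1 & a2 & a3). destruct (Hp x Px) as (b1 & b2 & b3).
  unfold scomp; simpl.
  set (u1 := s1 h (s0 p x)) in *. set (u2 := s2 h (s0 p x)) in *. set (u3 := s3 h (s0 p x)) in *.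
  set (v1 := s1 p x) in *. set (v2 := s2 p x) in *. set (v3 := s3 p x) in *.
  pose proof (Rabs_pos u1). pose proof (Rabs_pos u2). pose proof (Rabs_pos u3).
  pose proof (Rabs_pos v1). pose proof (Rabs_pos v2). pose proof (Rabs_pos v3).
  split; [|split].
  - rewrite Rabs_mult. nra.
  - eapply Rle_trans. apply Rabs_triang. rewrite !Rabs_mult.
    assert (Rabs v1 * Rabs v1 <= 1 * 1) by (apply mle; lra).
    assert (Rabs u2 * (Rabs v1 * Rabs v1) <= A * (1 * 1)) by (apply mle; nra).
    assert (Rabs u1 * Rabs v2 <= nu * (c * A)) by (apply mle; nra).
    assert (A <= A * (c * (1 - nu))) by nra. nra.
  - eapply Rle_trans. apply Rabs_triang. eapply Rle_trans. apply Rplus_le_compat_r. apply Rabs_triang.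
    rewrite !Rabs_mult. rewrite (Rabs_right 3) by lra.
    assert (Rabs v1 * Rabs v1 <= 1 * 1) by (apply mle; lra).
    assert (Rabs v1 * (Rabs v1 * Rabs v1) <= 1 * (1 * 1)) by (apply mle; nra).
    assert (Rabs u3 * (Rabs v1 * (Rabs v1 * Rabs v1)) <= T * (1 * (1 * 1))) by (apply mle; nra).
    assert (Rabs v1 * Rabs v2 <= 1 * (c * A)) by (apply mle; nra).
    assert (Rabs u2 * (Rabs v1 * Rabs v2) <= A * (1 * (c * A))) by (apply mle; nra).
    assert (0 <= c * A * A) by (apply Rmult_le_pos; nra).
    assert (0 <= c * (T + 3 * c * A * A)) by (apply Rmult_le_pos; nra).
    assert (Rabs u1 * Rabs v3 <= nu * (c * (T + 3 * c * A * A))) by (apply mle; nra).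
    set (K := c * (T + 3 * c * A * A)) in *.
    assert (T + 3 * c * A * A <= K * (1 - nu)).
    { unfold K. assert (0 <= T + 3 * c * A * A) by nra.
      replace (c * (T + 3 * c * A * A) * (1 - nu)) with ((T + 3 * c * A * A) * (c * (1 - nu))) by ring.
      nra. }
    nra.
Qed.

Lemma Bnd_comp_fin h p (S P : R -> Prop) nu A T c :
  0 <= nu <= 1 -> 0 <= A -> 0 <= T -> 1 <= c ->
  Bnd h S nu A T -> (forall x, P x -> S (s0 p x)) ->
  Bnd p P nu (c * A) (c * (T + 3 * c * A * A)) ->
  Bnd (scomp h p) P (nu * nu) (2 * c * A * nu) (2 * (c * (T + 3 * c * A * A)) * nu).
Proof.
  intros Hnu HA HT Hc Hh HS Hp x Px.
  destruct (Hh _ (HS x Px)) as (a1 & a2 & a3). destruct (Hp x Px) as (b1 & b2 & b3).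
  unfold scomp; simpl.
  set (u1 := s1 h (s0 p x)) in *. set (u2 := s2 h (s0 p x)) in *. set (u3 := s3 h (s0 p x)) in *.
  set (v1 := s1 p x) in *. set (v2 := s2 p x) in *. set (v3 := s3 p x) in *.
  pose proof (Rabs_pos u1). pose proof (Rabs_pos u2). pose proof (Rabs_pos u3).
  pose proof (Rabs_pos v1). pose proof (Rabs_pos v2). pose proof (Rabs_pos v3).
  split; [|split].
  - rewrite Rabs_mult. nra.
  - eapply Rle_trans. apply Rabs_triang. rewrite !Rabs_mult.
    assert (Rabs v1 * Rabs v1 <= nu * nu) by (apply mle; lra).
    assert (Rabs u2 * (Rabs v1 * Rabs v1) <= A * (nu * nu)) by (apply mle; nra).
    assert (Rabs u1 * Rabs v2 <= nu * (c * A)) by (apply mle; nra).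
    assert (A * nu <= c * A) by nra.
    assert (A * (nu * nu) <= (c * A) * nu) by (apply mle; nra).
    nra.
  - eapply Rle_trans. apply Rabs_triang. eapply Rle_trans. apply Rplus_le_compat_r. apply Rabs_triang.
    rewrite !Rabs_mult. rewrite (Rabs_right 3) by lra.
    set (K := c * (T + 3 * c * A * A)) in *.
    assert (0 <= c * A * A) by (apply Rmult_le_pos; nra).
    assert (0 <= T + 3 * c * A * A) by nra.
    assert (T + 3 * c * A * A <= K) by (unfold K; nra).
    assert (Rabs v1 * Rabs v1 <= nu * nu) by (apply mle; lra).
    assert (Rabs v1 * (Rabs v1 * Rabs v1) <= 1 * (nu * nu)) by (apply mle; nra).
    assert (nu * nu <= nu) by nra.
    assert (Rabs u3 * (Rabs v1 * (Rabs v1 * Rabs v1)) <= T * nu) by (apply mle; nra).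
    assert (Rabs v1 * Rabs v2 <= nu * (c * A)) by (apply mle; nra).
    assert (Rabs u2 * (Rabs v1 * Rabs v2) <= A * (nu * (c * A))) by (apply mle; nra).
    assert (Rabs u1 * Rabs v3 <= nu * K) by (apply mle; nra).
    assert (A * (nu * (c * A)) = nu * (c * A * A)) by ring.
    assert (T * nu <= nu * T) by lra.
    nra.
Qed.

Lemma Bnd_sid (P : R -> Prop) A K : 0 <= A -> 0 <= K -> Bnd sid P 1 A K.
Proof. intros HA HK x _. simpl. rewrite Rabs_R1, Rabs_R0. lra. Qed.

Lemma Bnd_weak s P n A T n' A' T' : n <= n' -> A <= A' -> T <= T' -> Bnd s P n A T -> Bnd s P n' A' T'.
Proof. intros h1 h2 h3 H x Px. destruct (H x Px) as (? & ? & ?). lra. Qed.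

Lemma Bnd_impl s (P Q : R -> Prop) n A T : (forall x, Q x -> P x) -> Bnd s P n A T -> Bnd s Q n A T.
Proof. intros HI H x Qx. apply H, HI, Qx. Qed.

Definition iterc (h : sm) (n : nat) (p : sm) : sm := Nat.iter n (scomp h) p.

Lemma Smooth_iterc h n p : Smooth h -> Smooth p -> Smooth (iterc h n p).
Proof. intros Hh Hp. induction n; simpl; auto. apply Smooth_comp; auto. Qed.

Definition scale (L : R) (s : sm) : sm := mksm
  (fun x => s0 s (L * x) / L) (fun x => s1 s (L * x)) (fun x => L * s2 s (L * x))
  (fun x => L * L * s3 s (L * x)).

Lemma Smooth_scale L s : L <> 0 -> Smooth s -> Smooth (scale L s).
Proof.
  intros HL (h1 & h2 & h3 & h4). unfold Smooth, scale; simpl. split; [|split; [|split]]; intro x.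
  - eapply dext; [intro; reflexivity| |].
    2:{ apply dmult. apply dcomp. apply h1. eapply dext; [intro; reflexivity| |apply dmult; [apply dconst|apply did]]. reflexivity.
        apply dconst. }
    simpl. field. auto.
  - eapply dext; [intro; reflexivity| |].
    2:{ apply dcomp. apply h2. eapply dext; [intro; reflexivity| |apply dmult; [apply dconst|apply did]]. reflexivity. }
    simpl. ring.
  - eapply dext; [intro; reflexivity| |].
    2:{ apply dmult. apply dconst. apply dcomp. apply h3. eapply dext; [intro; reflexivity| |apply dmult; [apply dconst|apply did]]. reflexivity. }
    simpl. ring.
  - apply cmult. apply cconst. apply ccomp. apply cmult. apply cconst. apply cid. apply h4.
Qed.

Lemma Bnd_scale L s (P : R -> Prop) n A T : 0 < L <= 1 -> 0 <= A -> 0 <= T -> Bnd s P n A T ->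
  Bnd (scale L s) (fun x => P (L * x)) n A T.
Proof.
  intros HL HA HT H x Px. destruct (H _ Px) as (a1 & a2 & a3). unfold scale; simpl.
  rewrite !Rabs_mult, (Rabs_right L) by lra. split; [lra|split].
  - pose proof (Rabs_pos (s2 s (L * x))). nra.
  - pose proof (Rabs_pos (s3 s (L * x))). assert (L * L <= 1) by nra. nra.
Qed.

Lemma cont_eps (h : R -> R) x : continuous h x ->
  forall eps, 0 < eps -> exists d, 0 < d /\ forall y, Rabs (y - x) < d -> Rabs (h y - h x) < eps.
Proof.
  intros Hc eps He. apply continuity_pt_filterlim in Hc.
  destruct (Hc eps He) as (d & Hd & H). exists d. split; auto. intros y Hy.
  destruct (Req_dec y x) as [->|Hne]. rewrite Rminus_diag, Rabs_R0. lra.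
  apply (H y). split. unfold D_x, no_cond. split; auto. simpl. unfold R_dist. exact Hy.
Qed.

Lemma in_cl_end (S : R -> Prop) (h : R -> R) (a c p : R) :
  a < c -> (p = a \/ p = c) -> continuous h p -> (forall x, a < x < c -> S (h x)) ->
  in_closure S (h p).
Proof.
  intros Hac Hp Hc HS eps He. destruct (cont_eps h p Hc eps He) as (d & Hd & H).
  set (m := Rmin d (c - a) / 2).
  assert (0 < m) by (unfold m; pose proof (Rmin_pos d (c-a) Hd ltac:(lra)); lra).
  assert (m < d) by (unfold m; pose proof (Rmin_l d (c-a)); lra).
  assert (m < c - a) by (unfold m; pose proof (Rmin_r d (c-a)); lra).
  destruct Hp as [->| ->].
  - exists (h (a + m)). split. apply HS. lra. apply H. rewrite Rabs_right; lra.
  - exists (h (c - m)). split. apply HS. lra. apply H. rewrite Rabs_left; lra.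
Qed.

Lemma in_cl_self (S : R -> Prop) y : S y -> in_closure S y.
Proof. intros Hy eps He. exists y. split; auto. rewrite Rminus_diag, Rabs_R0. lra. Qed.

Lemma iterf_S' n (f : R -> R) x : iterf (S n) f x = iterf n f (f x).
Proof. induction n; simpl; auto. simpl in IHn. rewrite IHn. reflexivity. Qed.

Lemma iterf_add n m (f : R -> R) x : iterf (n + m) f x = iterf n f (iterf m f x).
Proof. induction n; simpl; auto. rewrite IHn. reflexivity. Qed.

Lemma iter_S' n (h : R -> R) x : Nat.iter (S n) h x = Nat.iter n h (h x).
Proof. induction n; simpl; auto. simpl in IHn. rewrite IHn. reflexivity. Qed.

Lemma cont_iter (h : R -> R) : (forall x, continuous h x) -> forall n x, continuous (fun y => Nat.iter n h y) x.
Proof.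
  intros Hh n. induction n; intro x; simpl. apply cid.
  apply (ccomp h (fun y => Nat.iter n h y)). apply IHn. apply Hh.
Qed.

Lemma s0_iterc h n p x : s0 (iterc h n p) x = Nat.iter n (s0 h) (s0 p x).
Proof. induction n; simpl; auto. rewrite IHn. reflexivity. Qed.

Lemma orbit_iter (f h : R -> R) (D : R -> Prop) n w :
  (forall z, D z -> f z = h z) -> (forall j, (j < n)%nat -> D (Nat.iter j h w)) ->
  iterf n f w = Nat.iter n h w.
Proof.
  intros Hfh. induction n; intros Hj; simpl; auto.
  rewrite IHn by (intros; apply Hj; lia). apply Hfh. apply Hj. lia.
Qed.

Lemma ret_unique (P : nat -> Prop) r m : (1 <= r)%nat -> P r -> (forall j, (1 <= j)%nat -> (j < r)%nat -> ~ P j) ->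
  (1 <= m)%nat -> P m -> (forall j, (1 <= j)%nat -> (j < m)%nat -> ~ P j) -> r = m.
Proof.
  intros h1 h2 h3 h4 h5 h6. destruct (Nat.lt_total r m) as [H|[H|H]]; auto.
  exfalso; exact (h6 r h1 H h2). exfalso; exact (h3 m h4 H h5).
Qed.

Definition Good (f : R -> R) (b nu A T : R) : Prop :=
  0 < b < 1 /\ exists FL FR : sm, Smooth FL /\ Smooth FR /\
  (forall x, b - 1 <= x < 0 -> f x = s0 FL x) /\ (forall x, 0 < x <= b -> f x = s0 FR x) /\
  s0 FL 0 = b /\ s0 FR 0 = b - 1 /\
  (forall x y, b - 1 <= x -> x < y -> y <= 0 -> s0 FL x < s0 FL y) /\
  (forall x y, 0 <= x -> x < y -> y <= b -> s0 FR x < s0 FR y) /\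
  b - 1 <= s0 FL (b - 1) /\ s0 FR b <= b /\ s0 FR b < s0 FL (b - 1) /\
  Bnd FL (fun x => b - 1 <= x <= 0) nu A T /\ Bnd FR (fun x => 0 <= x <= b) nu A T.

Lemma Bnd_iter (F Psi : sm) (S P : R -> Prop) nu A T c n :
  0 <= nu <= 1 -> 0 <= A -> 0 <= T -> 1 <= c -> 1 <= c * (1 - nu) ->
  Bnd F S nu A T ->
  (forall j, (j < n)%nat -> forall y, P y -> S (Nat.iter j (s0 F) (s0 Psi y))) ->
  Bnd Psi P nu (c * A) (c * (T + 3 * c * A * A)) ->
  Bnd (iterc F n Psi) P nu (c * A) (c * (T + 3 * c * A * A)).
Proof.
  intros h1 h2 h3 h4 h5 HF HS HP. induction n. exact HP.
  change (Bnd (scomp F (iterc F n Psi)) P nu (c * A) (c * (T + 3 * c * A * A))).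
  apply (Bnd_comp_gen F _ S P nu A T c); auto.
  - intros y Py. rewrite s0_iterc. apply HS; auto.
  - eapply Bnd_weak; [| apply Rle_refl | apply Rle_refl | apply IHn]. lra.
    intros; apply HS; auto; lia.
Qed.

Lemma Bnd_one (F : sm) (S P : R -> Prop) nu A T c :
  0 <= nu <= 1 -> 0 <= A -> 0 <= T -> 1 <= c -> 1 <= c * (1 - nu) ->
  Bnd F S nu A T -> (forall y, P y -> S y) ->
  Bnd (scomp F sid) P nu (c * A) (c * (T + 3 * c * A * A)).
Proof.
  intros h1 h2 h3 h4 h5 HF HS. apply (Bnd_comp_gen F sid S P nu A T c); auto.
  apply Bnd_sid. nra. assert (0 <= c * A * A) by (apply Rmult_le_pos; nra).
  apply Rmult_le_pos; nra.
Qed.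

Lemma Bnd_two (F : sm) (p : sm) (S P : R -> Prop) nu A T c :
  0 <= nu <= 1 -> 0 <= A -> 0 <= T -> 1 <= c -> 1 <= c * (1 - nu) ->
  Bnd F S nu A T -> (forall y, P y -> S (s0 p y)) ->
  Bnd p P nu (c * A) (c * (T + 3 * c * A * A)) ->
  Bnd (scomp F p) P nu (c * A) (c * (T + 3 * c * A * A)).
Proof.
  intros h1 h2 h3 h4 h5 HF HS Hp. apply (Bnd_comp_gen F p S P nu A T c); auto.
  eapply Bnd_weak; [| apply Rle_refl | apply Rle_refl | apply Hp]. lra.
Qed.

Lemma s0_scale L s x : s0 (scale L s) x = s0 s (L * x) / L.
Proof. reflexivity. Qed.

Lemma step_left f b nu A T c g b' k lo hi :
  Good f b nu A T -> 0 <= nu <= 1 -> 0 <= A -> 0 <= T -> 1 <= c -> 1 <= c * (1 - nu) ->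
  renorm_type f b k true ->
  lo = iterf k f (b - 1) -> hi = iterf (S k) f b ->
  lo < hi -> b' = hi / (hi - lo) ->
  (forall x, b' - 1 <= x <= b' -> x <> 0 ->
      exists r : nat, (1 <= r)%nat /\
        lo <= iterf r f ((hi - lo) * x) <= hi /\
        (forall j, (1 <= j)%nat -> (j < r)%nat -> ~ (lo <= iterf j f ((hi - lo) * x) <= hi)) /\
        g x = iterf r f ((hi - lo) * x) / (hi - lo)) ->
  Good g b' (nu * nu) (2 * c * A * nu) (2 * (c * (T + 3 * c * A * A)) * nu).
Proof.
  intros HG Hnu HA HT Hc Hc2 Hren Hlo Hhi Hlh Hb' Hret.
  destruct HG as (Hb & FL & FR & SL & SR & EL & ER & FL0 & FR0 & ML & MR & Lb & Rb & Gap & BL & BR).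
  destruct Hren as (Hk & Hpre & Hkcl).
  set (fl := s0 FL) in *. set (fr := s0 FR) in *.
  set (a1 := fr b) in *. set (c1 := fl (b - 1)) in *.
  assert (fb : f b = a1) by (apply ER; lra).
  assert (fb1 : f (b - 1) = c1) by (apply EL; lra).
  assert (Ha1 : b - 1 < a1) by (pose proof (MR 0 b ltac:(lra) ltac:(lra) ltac:(lra)) as HH; rewrite FR0 in HH; exact HH).
  assert (Hc1 : c1 < b) by (pose proof (ML (b - 1) 0 ltac:(lra) ltac:(lra) ltac:(lra)) as HH; rewrite FL0 in HH; exact HH).
  assert (MLe : forall x y, b - 1 <= x -> x <= y -> y <= 0 -> fl x <= fl y).
  { intros x y h1 h2 h3. destruct (Req_dec x y) as [->|]; [lra|]. left; apply ML; lra. }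
  assert (MRe : forall x y, 0 <= x -> x <= y -> y <= b -> fr x <= fr y).
  { intros x y h1 h2 h3. destruct (Req_dec x y) as [->|]; [lra|]. left; apply MR; lra. }
  assert (Cfl : forall x, continuous fl x).
  { intro x. destruct SL as (d1 & _). exact (dcont _ _ _ (d1 x)). }
  assert (L1 : forall i, (i <= k)%nat -> forall x, a1 < x < c1 -> iterf i f x = Nat.iter i fl x).
  { induction i; intros Hi x Hx. reflexivity.
    simpl. pose proof (IHi ltac:(lia) x Hx) as E.
    assert (HC : in_closure (gap_image f b i) (iterf i f x)).
    { apply in_cl_self. exists x. rewrite fb, fb1. split; auto. }
    destruct (Hpre i ltac:(lia) _ HC) as [HH1 HH2]. rewrite E in *.
    apply EL. lra. }
  assert (L2 : forall i, (i <= k)%nat -> forall p, (p = a1 \/ p = c1) ->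
             in_closure (gap_image f b i) (Nat.iter i fl p)).
  { intros i Hi p Hp. apply (in_cl_end _ (fun y => Nat.iter i fl y) a1 c1); auto.
    apply cont_iter; auto.
    intros x Hx. exists x. rewrite fb, fb1. split; auto. symmetry; apply L1; auto. }
  assert (L3 : forall i, (i < k)%nat -> b - 1 < Nat.iter i fl a1 < 0 /\ b - 1 < Nat.iter i fl c1 < 0).
  { intros i Hi. split; apply (Hpre i Hi); apply L2; auto; lia. }
  assert (L3k : 0 < Nat.iter k fl a1 < b /\ 0 < Nat.iter k fl c1 < b).
  { split; apply Hkcl; apply L2; auto; lia. }
  assert (L4 : forall i, (i <= k)%nat ->
     (forall x y, b - 1 <= x -> x < y -> y <= c1 -> Nat.iter i fl x < Nat.iter i fl y) /\
     (forall x, b - 1 <= x <= c1 -> b - 1 <= Nat.iter i fl x)).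
  { induction i; intros Hi.
    - simpl. split; intros; lra.
    - destruct IHi as (IM & IB). lia.
      assert (Hup : forall x, b - 1 <= x <= c1 -> Nat.iter i fl x < 0).
      { intros x Hx. destruct (L3 i ltac:(lia)) as (_ & Hq).
        destruct (Req_dec x c1) as [->|]. lra. pose proof (IM x c1 ltac:(lra) ltac:(lra) ltac:(lra)). lra. }
      split.
      + intros x y h1 h2 h3. simpl. apply ML.
        apply IB; lra. apply IM; lra. left; apply Hup; lra.
      + intros x Hx. simpl. pose proof (IB x Hx). pose proof (Hup x Hx).
        pose proof (MLe (b - 1) (Nat.iter i fl x) ltac:(lra) ltac:(lra) ltac:(lra)) as HH.
        change (fl (b - 1)) with c1 in HH. lra. }
  assert (L4' : forall i, (i < k)%nat -> forall x, b - 1 <= x <= c1 -> b - 1 <= Nat.iter i fl x < 0).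
  { intros i Hi x Hx. destruct (L4 i ltac:(lia)) as (IM & IB). split. apply IB; auto.
    destruct (L3 i Hi) as (_ & Hq).
    destruct (Req_dec x c1) as [->|]. lra. pose proof (IM x c1 ltac:(lra) ltac:(lra) ltac:(lra)). lra. }
  assert (L5 : forall i, (i <= k)%nat -> forall w, b - 1 <= w <= c1 -> iterf i f w = Nat.iter i fl w).
  { intros i Hi w Hw. apply (orbit_iter f fl (fun z => b - 1 <= z < 0)).
    intros z Hz; apply EL; auto. intros j Hj. apply L4'; auto; lia. }
  assert (Elo : lo = Nat.iter k fl (b - 1)). { rewrite Hlo. apply L5; auto; lra. }
  assert (Ehi : hi = Nat.iter k fl a1). { rewrite Hhi, iterf_S', fb. apply L5; auto; lra. }
  destruct k as [|k']. lia.
  assert (Elo' : lo = Nat.iter k' fl c1). { rewrite Elo, iter_S'. reflexivity. }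
  set (q := Nat.iter (S k') fl c1) in *.
  assert (Eq : fl lo = q). { rewrite Elo'. reflexivity. }
  assert (Hlo_pos : b - 1 < lo < 0). { rewrite Elo'. apply L3; lia. }
  assert (Hhi_pos : 0 < hi < b). { rewrite Ehi; apply L3k. }
  assert (Hq : hi < q < b).
  { split. rewrite Ehi. apply (proj1 (L4 (S k') ltac:(lia))); lra. apply L3k. }
  assert (L7 : forall j, (j < S k')%nat -> Nat.iter j fl a1 < lo).
  { intros j Hj. destruct (Rlt_or_le (Nat.iter j fl a1) lo) as [|Hge]; auto. exfalso.
    assert (fl lo <= fl (Nat.iter j fl a1)).
    { pose proof (L4' j Hj a1 ltac:(lra)). apply MLe; lra. }
    change (fl (Nat.iter j fl a1)) with (Nat.iter (S j) fl a1) in H.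
    rewrite Eq in H.
    destruct (Nat.eq_dec (S j) (S k')) as [E|E].
    - rewrite E in H. rewrite <- Ehi in H. lra.
    - destruct (L3 (S j) ltac:(lia)) as ((_ & Hn) & _). lra. }
  assert (L8 : forall w, b - 1 < w < a1 ->
             (forall j, (j < S k')%nat -> b - 1 <= Nat.iter j fl w < lo) /\
             lo < Nat.iter (S k') fl w < hi).
  { intros w Hw. split.
    - intros j Hj. split. apply L4'; auto; lra.
      pose proof (L7 j Hj). pose proof (proj1 (L4 j ltac:(lia)) w a1 ltac:(lra) ltac:(lra) ltac:(lra)). lra.
    - rewrite Elo, Ehi. split; apply (proj1 (L4 (S k') ltac:(lia))); lra. }

  set (L := hi - lo) in *.
  assert (HL : 0 < L <= 1) by (unfold L; lra).
  assert (HLb : L * b' = hi) by (rewrite Hb'; field; lra).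
  assert (HLb1 : L * (b' - 1) = lo) by (unfold L in *; nra).
  assert (Hb'r : 0 < b' < 1).
  { split; [nra|]. nra. }
  set (Psi := scomp FR (scomp FL sid)).
  set (PhiL := iterc FL (S k') Psi).
  set (PhiR := iterc FL (S k') (scomp FR sid)).
  assert (EPL : forall y, s0 PhiL y = Nat.iter (S k') fl (fr (fl y))).
  { intro y. unfold PhiL. rewrite s0_iterc. reflexivity. }
  assert (EPR : forall y, s0 PhiR y = Nat.iter (S k') fl (fr y)).
  { intro y. unfold PhiR. rewrite s0_iterc. reflexivity. }
  assert (RL : forall y, lo <= y <= 0 -> q <= fl y <= b /\ b - 1 <= fr (fl y) <= a1).
  { intros y Hy. assert (q <= fl y) by (rewrite <- Eq; apply MLe; lra).
    assert (fl y <= b) by (rewrite <- FL0; apply MLe; lra).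
    split. lra. split. rewrite <- FR0; apply MRe; lra. apply MRe; lra. }
  assert (RR : forall y, 0 <= y <= hi -> b - 1 <= fr y <= a1).
  { intros y Hy. split. rewrite <- FR0; apply MRe; lra. apply MRe; lra. }
  assert (LB : forall y, lo <= y < 0 ->
     (forall j, (1 <= j)%nat -> (j < S k' + 2)%nat -> ~ (lo <= iterf j f y <= hi)) /\
     lo <= iterf (S k' + 2) f y <= hi /\ iterf (S k' + 2) f y = s0 PhiL y /\
     lo < s0 PhiL y < hi).
  { intros y Hy.
    assert (q <= fl y) by (rewrite <- Eq; apply MLe; lra).
    assert (fl y < b) by (rewrite <- FL0; apply ML; lra).
    assert (Hw : b - 1 < fr (fl y) < a1).
    { split. rewrite <- FR0; apply MR; lra. apply MR; lra. }
    assert (E1 : iterf 1 f y = fl y) by (simpl; apply EL; lra).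
    assert (E2 : forall j, iterf (j + 2) f y = iterf j f (fr (fl y))).
    { intro j. rewrite iterf_add. simpl. rewrite (EL y) by lra. rewrite (ER (fl y)) by lra. reflexivity. }
    destruct (L8 _ Hw) as (L8a & L8b).
    assert (E3 : iterf (S k' + 2) f y = s0 PhiL y).
    { rewrite E2, EPL. apply L5. lia. lra. }
    split; [|split; [|split]].
    - intros j Hj1 Hj2. destruct j as [|[|j']]. lia. rewrite E1. lra.
      replace (S (S j')) with (j' + 2)%nat by lia. rewrite E2.
      rewrite L5 by (try lia; lra). pose proof (L8a j' ltac:(lia)). lra.
    - rewrite E3, EPL. lra.
    - exact E3.
    - rewrite EPL. exact L8b. }
  assert (RB : forall y, 0 < y <= hi ->
     (forall j, (1 <= j)%nat -> (j < S k' + 1)%nat -> ~ (lo <= iterf j f y <= hi)) /\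
     lo <= iterf (S k' + 1) f y <= hi /\ iterf (S k' + 1) f y = s0 PhiR y /\
     lo < s0 PhiR y < hi).
  { intros y Hy.
    assert (Hw : b - 1 < fr y < a1).
    { split. rewrite <- FR0; apply MR; lra. apply MR; lra. }
    assert (E2 : forall j, iterf (j + 1) f y = iterf j f (fr y)).
    { intro j. rewrite iterf_add. simpl. rewrite (ER y) by lra. reflexivity. }
    destruct (L8 _ Hw) as (L8a & L8b).
    assert (E3 : iterf (S k' + 1) f y = s0 PhiR y).
    { rewrite E2, EPR. apply L5. lia. lra. }
    split; [|split; [|split]].
    - intros j Hj1 Hj2. destruct j as [|j']. lia.
      replace (S j') with (j' + 1)%nat by lia. rewrite E2.
      rewrite L5 by (try lia; lra). pose proof (L8a j' ltac:(lia)). lra.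
    - rewrite E3, EPR. lra.
    - exact E3.
    - rewrite EPR. exact L8b. }
  split; [exact Hb'r|].
  exists (scale L PhiL), (scale L PhiR).
  assert (HL0 : L <> 0) by lra.
  split; [|split; [|split; [|split; [|split; [|split; [|split; [|split; [|split; [|split; [|split; [|split]]]]]]]]]]].
  - apply Smooth_scale; auto. apply Smooth_iterc; auto. apply Smooth_comp; auto. apply Smooth_comp; auto. apply Smooth_sid.
  - apply Smooth_scale; auto. apply Smooth_iterc; auto. apply Smooth_comp; auto. apply Smooth_sid.
  - intros x Hx. destruct (Hret x ltac:(lra) ltac:(lra)) as (r & Hr1 & Hr2 & Hr3 & Hr4).
    assert (Hy : lo <= L * x < 0) by nra.
    destruct (LB _ Hy) as (B1 & B2 & B3 & _).
    assert (r = (S k' + 2)%nat).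
    { apply (ret_unique (fun m => lo <= iterf m f (L * x) <= hi)); auto. lia. }
    subst r. rewrite Hr4, B3. reflexivity.
  - intros x Hx. destruct (Hret x ltac:(lra) ltac:(lra)) as (r & Hr1 & Hr2 & Hr3 & Hr4).
    assert (Hy : 0 < L * x <= hi) by nra.
    destruct (RB _ Hy) as (B1 & B2 & B3 & _).
    assert (r = (S k' + 1)%nat).
    { apply (ret_unique (fun m => lo <= iterf m f (L * x) <= hi)); auto. lia. }
    subst r. rewrite Hr4, B3. reflexivity.
  - rewrite !s0_scale. rewrite Rmult_0_r, EPL, FL0. fold a1. rewrite <- Ehi. rewrite Hb'. reflexivity.
  - rewrite !s0_scale. rewrite Rmult_0_r, EPR, FR0. rewrite <- Elo. apply (Rmult_eq_reg_l L); [|lra]. rewrite HLb1. field. lra.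
  - intros x y Hx Hxy Hy. rewrite !s0_scale. apply Rmult_lt_compat_r. apply Rinv_0_lt_compat; lra.
    rewrite !EPL. destruct (RL (L * x) ltac:(nra)) as (R1 & R2). destruct (RL (L * y) ltac:(nra)) as (R3 & R4).
    apply (proj1 (L4 (S k') ltac:(lia))); try lra. apply MR; try lra. apply ML; nra.
  - intros x y Hx Hxy Hy. rewrite !s0_scale. apply Rmult_lt_compat_r. apply Rinv_0_lt_compat; lra.
    rewrite !EPR. destruct (RR (L * x) ltac:(nra)) as (R1 & R2). destruct (RR (L * y) ltac:(nra)) as (R3 & R4).
    apply (proj1 (L4 (S k') ltac:(lia))); try lra. apply MR; nra.
  - rewrite !s0_scale, HLb1. destruct (LB lo ltac:(lra)) as (_ & _ & _ & B4).
    assert (E : b' - 1 = lo / L) by (apply (Rmult_eq_reg_l L); [rewrite HLb1; field|]; lra).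
    rewrite E. apply Rmult_le_compat_r. left; apply Rinv_0_lt_compat; lra. lra.
  - rewrite !s0_scale, HLb. destruct (RB hi ltac:(lra)) as (_ & _ & _ & B4).
    assert (E : b' = hi / L) by (apply (Rmult_eq_reg_l L); [rewrite HLb; field|]; lra).
    rewrite E. apply Rmult_le_compat_r. left; apply Rinv_0_lt_compat; lra. lra.
  - rewrite !s0_scale. rewrite HLb, HLb1. apply Rmult_lt_compat_r. apply Rinv_0_lt_compat; lra.
    rewrite EPL, EPR. destruct (RL lo ltac:(lra)) as (R1 & R2). destruct (RR hi ltac:(lra)) as (R3 & R4).
    apply (proj1 (L4 (S k') ltac:(lia))); try lra. apply MR; try lra.
  - eapply Bnd_impl; [| apply (Bnd_scale L PhiL (fun y => lo <= y <= 0))].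
    + intros x Hx. simpl. nra.
    + exact HL.
    + assert (0 <= c * A) by nra. nra.
    + assert (0 <= c * A * A) by (apply Rmult_le_pos; nra).
      assert (0 <= c * (T + 3 * c * A * A)) by (apply Rmult_le_pos; nra). nra.
    + change PhiL with (scomp FL (iterc FL k' Psi)).
      apply (Bnd_comp_fin FL _ (fun x => b - 1 <= x <= 0)); auto.
      * intros y Hy. rewrite s0_iterc. change (s0 Psi y) with (fr (fl y)). fold fl.
        destruct (RL y Hy). pose proof (L4' k' ltac:(lia) (fr (fl y)) ltac:(lra)). lra.
      * apply (Bnd_iter FL Psi (fun x => b - 1 <= x <= 0)); auto.
        -- intros j Hj y Hy. change (s0 Psi y) with (fr (fl y)). fold fl.
           destruct (RL y Hy). pose proof (L4' j ltac:(lia) (fr (fl y)) ltac:(lra)). lra.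
        -- apply (Bnd_two FR _ (fun x => 0 <= x <= b)); auto.
           ++ intros y Hy. change (s0 (scomp FL sid) y) with (fl y). destruct (RL y Hy). lra.
           ++ apply (Bnd_one FL (fun x => b - 1 <= x <= 0)); auto. intros; lra.
  - eapply Bnd_impl; [| apply (Bnd_scale L PhiR (fun y => 0 <= y <= hi))].
    + intros x Hx. simpl. nra.
    + exact HL.
    + assert (0 <= c * A) by nra. nra.
    + assert (0 <= c * A * A) by (apply Rmult_le_pos; nra).
      assert (0 <= c * (T + 3 * c * A * A)) by (apply Rmult_le_pos; nra). nra.
    + change PhiR with (scomp FL (iterc FL k' (scomp FR sid))).
      apply (Bnd_comp_fin FL _ (fun x => b - 1 <= x <= 0)); auto.
      * intros y Hy. rewrite s0_iterc. change (s0 (scomp FR sid) y) with (fr y). fold fl.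
        destruct (RR y Hy). pose proof (L4' k' ltac:(lia) (fr y) ltac:(lra)). lra.
      * apply (Bnd_iter FL (scomp FR sid) (fun x => b - 1 <= x <= 0)); auto.
        -- intros j Hj y Hy. change (s0 (scomp FR sid) y) with (fr y). fold fl.
           destruct (RR y Hy). pose proof (L4' j ltac:(lia) (fr y) ltac:(lra)). lra.
        -- apply (Bnd_one FR (fun x => 0 <= x <= b)); auto. intros; lra.
Qed.

Lemma step_right f b nu A T c g b' k lo hi :
  Good f b nu A T -> 0 <= nu <= 1 -> 0 <= A -> 0 <= T -> 1 <= c -> 1 <= c * (1 - nu) ->
  renorm_type f b k false ->
  lo = iterf (S k) f (b - 1) -> hi = iterf k f b ->
  lo < hi -> b' = hi / (hi - lo) ->
  (forall x, b' - 1 <= x <= b' -> x <> 0 ->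
      exists r : nat, (1 <= r)%nat /\
        lo <= iterf r f ((hi - lo) * x) <= hi /\
        (forall j, (1 <= j)%nat -> (j < r)%nat -> ~ (lo <= iterf j f ((hi - lo) * x) <= hi)) /\
        g x = iterf r f ((hi - lo) * x) / (hi - lo)) ->
  Good g b' (nu * nu) (2 * c * A * nu) (2 * (c * (T + 3 * c * A * A)) * nu).
Proof.
  intros HG Hnu HA HT Hc Hc2 Hren Hlo Hhi Hlh Hb' Hret.
  destruct HG as (Hb & FL & FR & SL & SR & EL & ER & FL0 & FR0 & ML & MR & Lb & Rb & Gap & BL & BR).
  destruct Hren as (Hk & Hpre & Hkcl).
  set (fl := s0 FL) in *. set (fr := s0 FR) in *.
  set (a1 := fr b) in *. set (c1 := fl (b - 1)) in *.
  assert (fb : f b = a1) by (apply ER; lra).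
  assert (fb1 : f (b - 1) = c1) by (apply EL; lra).
  assert (Ha1 : b - 1 < a1) by (pose proof (MR 0 b ltac:(lra) ltac:(lra) ltac:(lra)) as HH; rewrite FR0 in HH; exact HH).
  assert (Hc1 : c1 < b) by (pose proof (ML (b - 1) 0 ltac:(lra) ltac:(lra) ltac:(lra)) as HH; rewrite FL0 in HH; exact HH).
  assert (MLe : forall x y, b - 1 <= x -> x <= y -> y <= 0 -> fl x <= fl y).
  { intros x y h1 h2 h3. destruct (Req_dec x y) as [->|]; [lra|]. left; apply ML; lra. }
  assert (MRe : forall x y, 0 <= x -> x <= y -> y <= b -> fr x <= fr y).
  { intros x y h1 h2 h3. destruct (Req_dec x y) as [->|]; [lra|]. left; apply MR; lra. }
  assert (Cfr : forall x, continuous fr x).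
  { intro x. destruct SR as (d1 & _). exact (dcont _ _ _ (d1 x)). }
  assert (L1 : forall i, (i <= k)%nat -> forall x, a1 < x < c1 -> iterf i f x = Nat.iter i fr x).
  { induction i; intros Hi x Hx. reflexivity.
    simpl. pose proof (IHi ltac:(lia) x Hx) as E.
    assert (HC : in_closure (gap_image f b i) (iterf i f x)).
    { apply in_cl_self. exists x. rewrite fb, fb1. split; auto. }
    destruct (Hpre i ltac:(lia) _ HC) as [HH1 HH2]. rewrite E in *.
    apply ER. lra. }
  assert (L2 : forall i, (i <= k)%nat -> forall p, (p = a1 \/ p = c1) ->
             in_closure (gap_image f b i) (Nat.iter i fr p)).
  { intros i Hi p Hp. apply (in_cl_end _ (fun y => Nat.iter i fr y) a1 c1); auto.
    apply cont_iter; auto.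
    intros x Hx. exists x. rewrite fb, fb1. split; auto. symmetry; apply L1; auto. }
  assert (L3 : forall i, (i < k)%nat -> 0 < Nat.iter i fr a1 < b /\ 0 < Nat.iter i fr c1 < b).
  { intros i Hi. split; apply (Hpre i Hi); apply L2; auto; lia. }
  assert (L3k : b - 1 < Nat.iter k fr a1 < 0 /\ b - 1 < Nat.iter k fr c1 < 0).
  { split; apply Hkcl; apply L2; auto; lia. }
  assert (Ha1p : 0 < a1) by (apply (L3 0%nat); lia).
  assert (L4 : forall i, (i <= k)%nat ->
     (forall x y, a1 <= x -> x < y -> y <= b -> Nat.iter i fr x < Nat.iter i fr y) /\
     (forall x, a1 <= x <= b -> Nat.iter i fr x <= b)).
  { induction i; intros Hi.
    - simpl. split; intros; lra.
    - destruct IHi as (IM & IB). lia.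
      assert (Hlow : forall x, a1 <= x <= b -> 0 < Nat.iter i fr x).
      { intros x Hx. destruct (L3 i ltac:(lia)) as (Hp & _).
        destruct (Req_dec x a1) as [->|]. lra. pose proof (IM a1 x ltac:(lra) ltac:(lra) ltac:(lra)). lra. }
      split.
      + intros x y h1 h2 h3. simpl. apply MR.
        left; apply Hlow; lra. apply IM; lra. apply IB; lra.
      + intros x Hx. simpl. pose proof (IB x Hx). pose proof (Hlow x Hx).
        pose proof (MRe (Nat.iter i fr x) b ltac:(lra) ltac:(lra) ltac:(lra)) as HH.
        change (fr b) with a1 in HH. lra. }
  assert (L4' : forall i, (i < k)%nat -> forall x, a1 <= x <= b -> 0 < Nat.iter i fr x <= b).
  { intros i Hi x Hx. destruct (L4 i ltac:(lia)) as (IM & IB). split; [|apply IB; auto].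
    destruct (L3 i Hi) as (Hp & _).
    destruct (Req_dec x a1) as [->|]. lra. pose proof (IM a1 x ltac:(lra) ltac:(lra) ltac:(lra)). lra. }
  assert (L5 : forall i, (i <= k)%nat -> forall w, a1 <= w <= b -> iterf i f w = Nat.iter i fr w).
  { intros i Hi w Hw. apply (orbit_iter f fr (fun z => 0 < z <= b)).
    intros z Hz; apply ER; auto. intros j Hj. apply L4'; auto; lia. }
  assert (Elo : lo = Nat.iter k fr c1). { rewrite Hlo, iterf_S', fb1. apply L5; auto; lra. }
  assert (Ehi : hi = Nat.iter k fr b). { rewrite Hhi. apply L5; auto; lra. }
  destruct k as [|k']. lia.
  assert (Ehi' : hi = Nat.iter k' fr a1). { rewrite Ehi, iter_S'. reflexivity. }
  set (p := Nat.iter (S k') fr a1) in *.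
  assert (Ep : fr hi = p). { rewrite Ehi'. reflexivity. }
  assert (Hlo_pos : b - 1 < lo < 0). { rewrite Elo; apply L3k. }
  assert (Hhi_pos : 0 < hi < b). { rewrite Ehi'. apply L3; lia. }
  assert (Hp : b - 1 < p < lo).
  { split. apply L3k. rewrite Elo. apply (proj1 (L4 (S k') ltac:(lia))); lra. }
  assert (L7 : forall j, (j < S k')%nat -> hi < Nat.iter j fr c1).
  { intros j Hj. destruct (Rlt_or_le hi (Nat.iter j fr c1)) as [|Hge]; auto. exfalso.
    assert (fr (Nat.iter j fr c1) <= fr hi).
    { pose proof (L4' j Hj c1 ltac:(lra)). apply MRe; lra. }
    change (fr (Nat.iter j fr c1)) with (Nat.iter (S j) fr c1) in H.
    rewrite Ep in H.
    destruct (Nat.eq_dec (S j) (S k')) as [E|E].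
    - rewrite E in H. rewrite <- Elo in H. lra.
    - destruct (L3 (S j) ltac:(lia)) as (_ & (Hn & _)). lra. }
  assert (L8 : forall w, c1 < w < b ->
             (forall j, (j < S k')%nat -> hi < Nat.iter j fr w <= b) /\
             lo < Nat.iter (S k') fr w < hi).
  { intros w Hw. split.
    - intros j Hj. split. 2: apply L4'; auto; lra.
      pose proof (L7 j Hj). pose proof (proj1 (L4 j ltac:(lia)) c1 w ltac:(lra) ltac:(lra) ltac:(lra)). lra.
    - rewrite Elo, Ehi. split; apply (proj1 (L4 (S k') ltac:(lia))); lra. }
  set (L := hi - lo) in *.
  assert (HL : 0 < L <= 1) by (unfold L; lra).
  assert (HLb : L * b' = hi) by (rewrite Hb'; field; lra).
  assert (HLb1 : L * (b' - 1) = lo) by (unfold L in *; nra).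
  assert (Hb'r : 0 < b' < 1).
  { split; [nra|]. nra. }
  set (Psi := scomp FL (scomp FR sid)).
  set (PhiL := iterc FR (S k') (scomp FL sid)).
  set (PhiR := iterc FR (S k') Psi).
  assert (EPL : forall y, s0 PhiL y = Nat.iter (S k') fr (fl y)).
  { intro y. unfold PhiL. rewrite s0_iterc. reflexivity. }
  assert (EPR : forall y, s0 PhiR y = Nat.iter (S k') fr (fl (fr y))).
  { intro y. unfold PhiR. rewrite s0_iterc. reflexivity. }
  assert (RL : forall y, lo <= y <= 0 -> c1 <= fl y <= b).
  { intros y Hy. split. apply MLe; lra. rewrite <- FL0; apply MLe; lra. }
  assert (RR : forall y, 0 <= y <= hi -> b - 1 <= fr y <= p /\ c1 <= fl (fr y) <= b).
  { intros y Hy. assert (b - 1 <= fr y) by (rewrite <- FR0; apply MRe; lra).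
    assert (fr y <= p) by (rewrite <- Ep; apply MRe; lra).
    split. lra. split. apply MLe; lra. rewrite <- FL0; apply MLe; lra. }
  assert (LB : forall y, lo <= y < 0 ->
     (forall j, (1 <= j)%nat -> (j < S k' + 1)%nat -> ~ (lo <= iterf j f y <= hi)) /\
     lo <= iterf (S k' + 1) f y <= hi /\ iterf (S k' + 1) f y = s0 PhiL y /\
     lo < s0 PhiL y < hi).
  { intros y Hy.
    assert (Hw : c1 < fl y < b).
    { split. apply ML; lra. rewrite <- FL0; apply ML; lra. }
    assert (E2 : forall j, iterf (j + 1) f y = iterf j f (fl y)).
    { intro j. rewrite iterf_add. simpl. rewrite (EL y) by lra. reflexivity. }
    destruct (L8 _ Hw) as (L8a & L8b).
    assert (E3 : iterf (S k' + 1) f y = s0 PhiL y).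
    { rewrite E2, EPL. apply L5. lia. lra. }
    split; [|split; [|split]].
    - intros j Hj1 Hj2. destruct j as [|j']. lia.
      replace (S j') with (j' + 1)%nat by lia. rewrite E2.
      rewrite L5 by (try lia; lra). pose proof (L8a j' ltac:(lia)). lra.
    - rewrite E3, EPL. lra.
    - exact E3.
    - rewrite EPL. exact L8b. }
  assert (RB : forall y, 0 < y <= hi ->
     (forall j, (1 <= j)%nat -> (j < S k' + 2)%nat -> ~ (lo <= iterf j f y <= hi)) /\
     lo <= iterf (S k' + 2) f y <= hi /\ iterf (S k' + 2) f y = s0 PhiR y /\
     lo < s0 PhiR y < hi).
  { intros y Hy.
    assert (b - 1 < fr y) by (rewrite <- FR0; apply MR; lra).
    assert (fr y <= p) by (rewrite <- Ep; apply MRe; lra).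
    assert (Hw : c1 < fl (fr y) < b).
    { split. apply ML; lra. rewrite <- FL0; apply ML; lra. }
    assert (E1 : iterf 1 f y = fr y) by (simpl; apply ER; lra).
    assert (E2 : forall j, iterf (j + 2) f y = iterf j f (fl (fr y))).
    { intro j. rewrite iterf_add. simpl. rewrite (ER y) by lra. rewrite (EL (fr y)) by lra. reflexivity. }
    destruct (L8 _ Hw) as (L8a & L8b).
    assert (E3 : iterf (S k' + 2) f y = s0 PhiR y).
    { rewrite E2, EPR. apply L5. lia. lra. }
    split; [|split; [|split]].
    - intros j Hj1 Hj2. destruct j as [|[|j']]. lia. rewrite E1. lra.
      replace (S (S j')) with (j' + 2)%nat by lia. rewrite E2.
      rewrite L5 by (try lia; lra). pose proof (L8a j' ltac:(lia)). lra.
    - rewrite E3, EPR. lra.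
    - exact E3.
    - rewrite EPR. exact L8b. }
  split; [exact Hb'r|].
  exists (scale L PhiL), (scale L PhiR).
  assert (HL0 : L <> 0) by lra.
  split; [|split; [|split; [|split; [|split; [|split; [|split; [|split; [|split; [|split; [|split; [|split]]]]]]]]]]].
  - apply Smooth_scale; auto. apply Smooth_iterc; auto. apply Smooth_comp; auto. apply Smooth_sid.
  - apply Smooth_scale; auto. apply Smooth_iterc; auto. apply Smooth_comp; auto. apply Smooth_comp; auto. apply Smooth_sid.
  - intros x Hx. destruct (Hret x ltac:(lra) ltac:(lra)) as (r & Hr1 & Hr2 & Hr3 & Hr4).
    assert (Hy : lo <= L * x < 0) by nra.
    destruct (LB _ Hy) as (B1 & B2 & B3 & _).
    assert (r = (S k' + 1)%nat).
    { apply (ret_unique (fun m => lo <= iterf m f (L * x) <= hi)); auto. lia. }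
    subst r. rewrite Hr4, B3. reflexivity.
  - intros x Hx. destruct (Hret x ltac:(lra) ltac:(lra)) as (r & Hr1 & Hr2 & Hr3 & Hr4).
    assert (Hy : 0 < L * x <= hi) by nra.
    destruct (RB _ Hy) as (B1 & B2 & B3 & _).
    assert (r = (S k' + 2)%nat).
    { apply (ret_unique (fun m => lo <= iterf m f (L * x) <= hi)); auto. lia. }
    subst r. rewrite Hr4, B3. reflexivity.
  - rewrite !s0_scale. rewrite Rmult_0_r, EPL, FL0. rewrite <- Ehi. rewrite Hb'. reflexivity.
  - rewrite !s0_scale. rewrite Rmult_0_r, EPR, FR0. fold c1. rewrite <- Elo.
    apply (Rmult_eq_reg_l L); [|lra]. rewrite HLb1. field. lra.
  - intros x y Hx Hxy Hy. rewrite !s0_scale. apply Rmult_lt_compat_r. apply Rinv_0_lt_compat; lra.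
    rewrite !EPL. destruct (RL (L * x) ltac:(nra)) as (R1 & R2). destruct (RL (L * y) ltac:(nra)) as (R3 & R4).
    apply (proj1 (L4 (S k') ltac:(lia))); try lra. apply ML; nra.
  - intros x y Hx Hxy Hy. rewrite !s0_scale. apply Rmult_lt_compat_r. apply Rinv_0_lt_compat; lra.
    rewrite !EPR. destruct (RR (L * x) ltac:(nra)) as (R1 & R2). destruct (RR (L * y) ltac:(nra)) as (R3 & R4).
    apply (proj1 (L4 (S k') ltac:(lia))); try lra. apply ML; try lra. apply MR; nra.
  - rewrite !s0_scale, HLb1. destruct (LB lo ltac:(lra)) as (_ & _ & _ & B4).
    assert (E : b' - 1 = lo / L) by (apply (Rmult_eq_reg_l L); [rewrite HLb1; field|]; lra).
    rewrite E. apply Rmult_le_compat_r. left; apply Rinv_0_lt_compat; lra. lra.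
  - rewrite !s0_scale, HLb. destruct (RB hi ltac:(lra)) as (_ & _ & _ & B4).
    assert (E : b' = hi / L) by (apply (Rmult_eq_reg_l L); [rewrite HLb; field|]; lra).
    rewrite E. apply Rmult_le_compat_r. left; apply Rinv_0_lt_compat; lra. lra.
  - rewrite !s0_scale. rewrite HLb, HLb1. apply Rmult_lt_compat_r. apply Rinv_0_lt_compat; lra.
    rewrite EPL, EPR. destruct (RL lo ltac:(lra)) as (R1 & R2). destruct (RR hi ltac:(lra)) as (R3 & R4).
    apply (proj1 (L4 (S k') ltac:(lia))); try lra. apply ML; try lra. 
  - eapply Bnd_impl; [| apply (Bnd_scale L PhiL (fun y => lo <= y <= 0))].
    + intros x Hx. simpl. nra.
    + exact HL.
    + assert (0 <= c * A) by nra. nra.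
    + assert (0 <= c * A * A) by (apply Rmult_le_pos; nra).
      assert (0 <= c * (T + 3 * c * A * A)) by (apply Rmult_le_pos; nra). nra.
    + change PhiL with (scomp FR (iterc FR k' (scomp FL sid))).
      apply (Bnd_comp_fin FR _ (fun x => 0 <= x <= b)); auto.
      * intros y Hy. rewrite s0_iterc. change (s0 (scomp FL sid) y) with (fl y). fold fr.
        destruct (RL y Hy). pose proof (L4' k' ltac:(lia) (fl y) ltac:(lra)). lra.
      * apply (Bnd_iter FR (scomp FL sid) (fun x => 0 <= x <= b)); auto.
        -- intros j Hj y Hy. change (s0 (scomp FL sid) y) with (fl y). fold fr.
           destruct (RL y Hy). pose proof (L4' j ltac:(lia) (fl y) ltac:(lra)). lra.
        -- apply (Bnd_one FL (fun x => b - 1 <= x <= 0)); auto. intros; lra.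
  - eapply Bnd_impl; [| apply (Bnd_scale L PhiR (fun y => 0 <= y <= hi))].
    + intros x Hx. simpl. nra.
    + exact HL.
    + assert (0 <= c * A) by nra. nra.
    + assert (0 <= c * A * A) by (apply Rmult_le_pos; nra).
      assert (0 <= c * (T + 3 * c * A * A)) by (apply Rmult_le_pos; nra). nra.
    + change PhiR with (scomp FR (iterc FR k' Psi)).
      apply (Bnd_comp_fin FR _ (fun x => 0 <= x <= b)); auto.
      * intros y Hy. rewrite s0_iterc. change (s0 Psi y) with (fl (fr y)). fold fr.
        destruct (RR y Hy). pose proof (L4' k' ltac:(lia) (fl (fr y)) ltac:(lra)). lra.
      * apply (Bnd_iter FR Psi (fun x => 0 <= x <= b)); auto.
        -- intros j Hj y Hy. change (s0 Psi y) with (fl (fr y)). fold fr.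
           destruct (RR y Hy). pose proof (L4' j ltac:(lia) (fl (fr y)) ltac:(lra)). lra.
        -- apply (Bnd_two FL _ (fun x => b - 1 <= x <= 0)); auto.
           ++ intros y Hy. change (s0 (scomp FR sid) y) with (fr y). destruct (RR y Hy). lra.
           ++ apply (Bnd_one FR (fun x => 0 <= x <= b)); auto. intros; lra.
Qed.

Lemma lim_left (f : R -> R) l : filterlim f (at_left 0) (locally l) ->
  forall eps, 0 < eps -> exists d, 0 < d /\ forall y, - d < y < 0 -> Rabs (f y - l) < eps.
Proof.
  intros H eps He. destruct (H (fun z => Rabs (z - l) < eps)) as (d & Hd).
  exists (mkposreal eps He). intros y Hy. exact Hy.
  exists d. split. apply cond_pos. intros y Hy. apply Hd. 2: lra.
  change (Rabs (y - 0) < d). rewrite Rminus_0_r, Rabs_left; lra.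
Qed.

Lemma lim_right (f : R -> R) l : filterlim f (at_right 0) (locally l) ->
  forall eps, 0 < eps -> exists d, 0 < d /\ forall y, 0 < y < d -> Rabs (f y - l) < eps.
Proof.
  intros H eps He. destruct (H (fun z => Rabs (z - l) < eps)) as (d & Hd).
  exists (mkposreal eps He). intros y Hy. exact Hy.
  exists d. split. apply cond_pos. intros y Hy. apply Hd. 2: lra.
  change (Rabs (y - 0) < d). rewrite Rminus_0_r, Rabs_right; lra.
Qed.

Lemma val_at_0_left (f h : R -> R) l d0 : 0 < d0 -> filterlim f (at_left 0) (locally l) ->
  continuous h 0 -> (forall y, - d0 < y < 0 -> f y = h y) -> h 0 = l.
Proof.
  intros Hd0 Hl Hc Heq. destruct (Req_dec (h 0) l) as [|Hne]; auto. exfalso.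
  assert (Hne' : h 0 - l <> 0) by lra.
  set (e := Rabs (h 0 - l) / 2). assert (He : 0 < e) by (unfold e; pose proof (Rabs_pos_lt _ Hne'); lra).
  destruct (lim_left f l Hl e He) as (d1 & Hd1 & H1).
  destruct (cont_eps h 0 Hc e He) as (d2 & Hd2 & H2).
  set (y := - Rmin d0 (Rmin d1 d2) / 2).
  assert (0 < Rmin d0 (Rmin d1 d2)) by (repeat apply Rmin_pos; auto).
  assert (Rmin d0 (Rmin d1 d2) <= d0) by apply Rmin_l.
  assert (Rmin d0 (Rmin d1 d2) <= d1) by (eapply Rle_trans; [apply Rmin_r| apply Rmin_l]).
  assert (Rmin d0 (Rmin d1 d2) <= d2) by (eapply Rle_trans; [apply Rmin_r| apply Rmin_r]).
  specialize (H1 y ltac:(unfold y; lra)). specialize (H2 y ltac:(unfold y; rewrite Rminus_0_r, Rabs_left; lra)).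
  rewrite Heq in H1 by (unfold y; lra).
  pose proof (Rabs_triang (h y - l) (h 0 - h y)) as HT. replace (h y - l + (h 0 - h y)) with (h 0 - l) in HT by ring.
  rewrite Rabs_minus_sym in H2. unfold e in *. lra.
Qed.

Lemma val_at_0_right (f h : R -> R) l d0 : 0 < d0 -> filterlim f (at_right 0) (locally l) ->
  continuous h 0 -> (forall y, 0 < y < d0 -> f y = h y) -> h 0 = l.
Proof.
  intros Hd0 Hl Hc Heq. destruct (Req_dec (h 0) l) as [|Hne]; auto. exfalso.
  assert (Hne' : h 0 - l <> 0) by lra.
  set (e := Rabs (h 0 - l) / 2). assert (He : 0 < e) by (unfold e; pose proof (Rabs_pos_lt _ Hne'); lra).
  destruct (lim_right f l Hl e He) as (d1 & Hd1 & H1).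
  destruct (cont_eps h 0 Hc e He) as (d2 & Hd2 & H2).
  set (y := Rmin d0 (Rmin d1 d2) / 2).
  assert (0 < Rmin d0 (Rmin d1 d2)) by (repeat apply Rmin_pos; auto).
  assert (Rmin d0 (Rmin d1 d2) <= d0) by apply Rmin_l.
  assert (Rmin d0 (Rmin d1 d2) <= d1) by (eapply Rle_trans; [apply Rmin_r| apply Rmin_l]).
  assert (Rmin d0 (Rmin d1 d2) <= d2) by (eapply Rle_trans; [apply Rmin_r| apply Rmin_r]).
  specialize (H1 y ltac:(unfold y; lra)). specialize (H2 y ltac:(unfold y; rewrite Rminus_0_r, Rabs_right; lra)).
  rewrite Heq in H1 by (unfold y; lra).
  pose proof (Rabs_triang (h y - l) (h 0 - h y)) as HT. replace (h y - l + (h 0 - h y)) with (h 0 - l) in HT by ring.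
  rewrite Rabs_minus_sym in H2. unfold e in *. lra.
Qed.

Lemma bound_ext (h : R -> R) p M d0 : 0 < d0 -> continuous h p ->
  ((forall y, p - d0 < y < p -> Rabs (h y) <= M) \/ (forall y, p < y < p + d0 -> Rabs (h y) <= M)) ->
  Rabs (h p) <= M.
Proof.
  intros Hd0 Hc HB. destruct (Rle_or_lt (Rabs (h p)) M) as [|Hlt]; auto. exfalso.
  set (e := Rabs (h p) - M). assert (He : 0 < e) by (unfold e; lra).
  destruct (cont_eps h p Hc e He) as (d & Hd & H).
  assert (0 < Rmin d0 d) by (apply Rmin_pos; auto).
  assert (Rmin d0 d <= d0) by apply Rmin_l. assert (Rmin d0 d <= d) by apply Rmin_r.
  destruct HB as [HB|HB].
  - set (y := p - Rmin d0 d / 2). specialize (HB y ltac:(unfold y; lra)).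
    specialize (H y ltac:(unfold y; rewrite Rabs_left; lra)).
    pose proof (Rabs_triang_inv (h p) (h y)) as HT. rewrite Rabs_minus_sym in H. unfold e in *. lra.
  - set (y := p + Rmin d0 d / 2). specialize (HB y ltac:(unfold y; lra)).
    specialize (H y ltac:(unfold y; rewrite Rabs_right; lra)).
    pose proof (Rabs_triang_inv (h p) (h y)) as HT. rewrite Rabs_minus_sym in H. unfold e in *. lra.
Qed.

Lemma abs_max (h : R -> R) a b : a <= b -> (forall x, continuous h x) ->
  exists M, 0 <= M /\ forall x, a <= x <= b -> Rabs (h x) <= M.
Proof.
  intros Hab Hc. destruct (continuity_ab_maj (fun x => Rabs (h x)) a b Hab) as (Mx & HM & _).
  - intros x _. apply (continuity_pt_comp h Rabs). apply continuity_pt_filterlim. apply Hc.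
    apply Rcontinuity_abs.
  - exists (Rabs (h Mx)). split. apply Rabs_pos. exact HM.
Qed.

Lemma level0 f b : C3_dissipative_gap_map f b ->
  exists nu A T, 0 < nu < 1 /\ 0 <= A /\ 0 <= T /\ Good f b nu A T.
Proof.
  intros ((Hb & cL & cR & mL & mR & limL & limR & gap & rng) & FL & FR & CL & CR & EL & ER & nu & Hnu & DL & DR).
  pose proof (Smooth_of_C3 FL CL) as SL. pose proof (Smooth_of_C3 FR CR) as SR.
  set (GL := of_C3 FL) in *. set (GR := of_C3 FR) in *.
  assert (Hnu0 : 0 < nu) by (destruct (DL (b - 1)) as [h1 h2]; [unfold left_branch; lra|lra]).
  pose proof SL as (dl1 & dl2 & dl3 & dl4). pose proof SR as (dr1 & dr2 & dr3 & dr4).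
  destruct (abs_max (s2 GL) (b - 1) 0 ltac:(lra) (fun x => dcont _ _ _ (dl3 x))) as (A1 & HA1 & BA1).
  destruct (abs_max (s2 GR) 0 b ltac:(lra) (fun x => dcont _ _ _ (dr3 x))) as (A2 & HA2 & BA2).
  destruct (abs_max (s3 GL) (b - 1) 0 ltac:(lra) dl4) as (T1 & HT1 & BT1).
  destruct (abs_max (s3 GR) 0 b ltac:(lra) dr4) as (T2 & HT2 & BT2).
  exists nu, (Rmax A1 A2), (Rmax T1 T2).
  assert (HA : 0 <= Rmax A1 A2) by (eapply Rle_trans; [exact HA1| apply Rmax_l]).
  assert (HT : 0 <= Rmax T1 T2) by (eapply Rle_trans; [exact HT1| apply Rmax_l]).
  split; [lra|]. split; [exact HA|]. split; [exact HT|].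
  assert (FL0 : s0 GL 0 = b).
  { apply (val_at_0_left f (s0 GL) b (1 - b)); auto. lra. exact (dcont _ _ _ (dl1 0)).
    intros y Hy. apply EL. unfold left_branch. lra. }
  assert (FR0 : s0 GR 0 = b - 1).
  { apply (val_at_0_right f (s0 GR) (b - 1) b); auto. lra. exact (dcont _ _ _ (dr1 0)).
    intros y Hy. apply ER. unfold right_branch. lra. }
  assert (EL' : forall x, b - 1 <= x < 0 -> f x = s0 GL x) by (intros; apply EL; unfold left_branch; lra).
  assert (ER' : forall x, 0 < x <= b -> f x = s0 GR x) by (intros; apply ER; unfold right_branch; lra).
  split; [exact Hb|]. exists GL, GR.
  split; [|split; [|split; [|split; [|split; [|split; [|split; [|split; [|split; [|split; [|split; [|split]]]]]]]]]]]; auto.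
  - intros x y h1 h2 h3. destruct (Req_dec y 0) as [->|Hy].
    + rewrite FL0, <- EL' by lra. pose proof (mL x (x / 2) ltac:(unfold left_branch; lra) ltac:(unfold left_branch; lra) ltac:(lra)).
      pose proof (rng (x / 2) ltac:(lra) ltac:(lra)). lra.
    + rewrite <- !EL' by lra. apply mL; unfold left_branch; lra.
  - intros x y h1 h2 h3. destruct (Req_dec x 0) as [->|Hx].
    + rewrite FR0, <- ER' by lra. pose proof (mR (y / 2) y ltac:(unfold right_branch; lra) ltac:(unfold right_branch; lra) ltac:(lra)).
      pose proof (rng (y / 2) ltac:(lra) ltac:(lra)). lra.
    + rewrite <- !ER' by lra. apply mR; unfold right_branch; lra.
  - rewrite <- EL' by lra. apply rng; lra.
  - rewrite <- ER' by lra. apply rng; lra.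
  - rewrite <- EL', <- ER' by lra. exact gap.
  - intros x Hx. split; [|split].
    + destruct (Req_dec x 0) as [->|Hx0].
      * apply (bound_ext (s1 GL) 0 nu (1 - b)). lra. exact (dcont _ _ _ (dl2 0)).
        left. intros y Hy. destruct (DL y ltac:(unfold left_branch; lra)).
        change (s1 GL y) with (Derive FL y). rewrite Rabs_right; lra.
      * destruct (DL x ltac:(unfold left_branch; lra)).
        change (s1 GL x) with (Derive FL x). rewrite Rabs_right; lra.
    + eapply Rle_trans; [apply BA1; lra | apply Rmax_l].
    + eapply Rle_trans; [apply BT1; lra | apply Rmax_l].
  - intros x Hx. split; [|split].
    + destruct (Req_dec x 0) as [->|Hx0].
      * apply (bound_ext (s1 GR) 0 nu b). lra. exact (dcont _ _ _ (dr2 0)).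
        right. intros y Hy. destruct (DR y ltac:(unfold right_branch; lra)).
        change (s1 GR y) with (Derive FR y). rewrite Rabs_right; lra.
      * destruct (DR x ltac:(unfold right_branch; lra)).
        change (s1 GR x) with (Derive FR x). rewrite Rabs_right; lra.
    + eapply Rle_trans; [apply BA2; lra | apply Rmax_r].
    + eapply Rle_trans; [apply BT2; lra | apply Rmax_r].
Qed.

Fixpoint sq (nu0 A0 T0 c : R) (n : nat) : R * R * R :=
  match n with
  | O => (nu0, A0, T0)
  | S m => let '(nu, A, T) := sq nu0 A0 T0 c m in
           (nu * nu, 2 * c * A * nu, 2 * (c * (T + 3 * c * A * A)) * nu)
  end.

Definition snu nu0 A0 T0 c n := fst (fst (sq nu0 A0 T0 c n)).
Definition sA nu0 A0 T0 c n := snd (fst (sq nu0 A0 T0 c n)).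
Definition sT nu0 A0 T0 c n := snd (sq nu0 A0 T0 c n).

Lemma sq_S nu0 A0 T0 c n :
  snu nu0 A0 T0 c (S n) = snu nu0 A0 T0 c n * snu nu0 A0 T0 c n /\
  sA nu0 A0 T0 c (S n) = 2 * c * sA nu0 A0 T0 c n * snu nu0 A0 T0 c n /\
  sT nu0 A0 T0 c (S n) = 2 * (c * (sT nu0 A0 T0 c n + 3 * c * sA nu0 A0 T0 c n * sA nu0 A0 T0 c n)) * snu nu0 A0 T0 c n.
Proof. unfold snu, sA, sT. simpl. destruct (sq nu0 A0 T0 c n) as ((nu & A) & T). simpl. auto. Qed.

Lemma sq_0 nu0 A0 T0 c : snu nu0 A0 T0 c 0 = nu0 /\ sA nu0 A0 T0 c 0 = A0 /\ sT nu0 A0 T0 c 0 = T0.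
Proof. auto. Qed.

Lemma pow_le1 x n : 0 <= x <= 1 -> x ^ n <= 1.
Proof. intros H. induction n; simpl. lra. assert (x * x ^ n <= 1 * 1) by (apply mle; try lra; apply pow_le; lra). lra. Qed.

Lemma sq_bounds nu0 A0 T0 c : 0 <= nu0 <= 1 -> 0 <= A0 -> 0 <= T0 -> 1 <= c -> forall n,
  0 <= snu nu0 A0 T0 c n <= nu0 ^ n * nu0 /\ 0 <= sA nu0 A0 T0 c n /\ 0 <= sT nu0 A0 T0 c n.
Proof.
  intros h1 h2 h3 h4 n. induction n.
  - destruct (sq_0 nu0 A0 T0 c) as (-> & -> & ->). simpl. lra.
  - destruct (sq_S nu0 A0 T0 c n) as (-> & -> & ->).
    set (nu := snu nu0 A0 T0 c n) in *. set (A := sA nu0 A0 T0 c n) in *. set (T := sT nu0 A0 T0 c n) in *.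
    destruct IHn as ((Hn1 & Hn2) & HA & HT).
    assert (0 <= nu0 ^ n) by (apply pow_le; lra).
    assert (nu0 ^ n <= 1) by (apply pow_le1; lra).
    assert (nu0 ^ n * nu0 <= 1 * 1) by (apply mle; lra).
    split; [split|split].
    + nra.
    + simpl. assert (nu0 ^ n * nu0 <= 1 * nu0) by (apply mle; lra).
      assert (nu * nu <= (nu0 ^ n * nu0) * nu0) by (apply mle; lra).
      replace (nu0 * nu0 ^ n * nu0) with (nu0 ^ n * nu0 * nu0) by ring. lra.
    + assert (0 <= c * A) by nra. nra.
    + assert (0 <= c * A * A) by (apply Rmult_le_pos; nra).
      assert (0 <= c * (T + 3 * c * A * A)) by (apply Rmult_le_pos; nra). nra.
Qed.

Lemma sq_small nu0 A0 T0 c : 0 <= nu0 < 1 -> 0 <= A0 -> 0 <= T0 -> 1 <= c ->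
  forall eps, 0 < eps -> exists N, forall n, (N <= n)%nat ->
    snu nu0 A0 T0 c n <= eps /\ sA nu0 A0 T0 c n <= eps /\ sT nu0 A0 T0 c n <= eps.
Proof.
  intros h1 h2 h3 h4 eps He.
  pose proof (sq_bounds nu0 A0 T0 c ltac:(lra) h2 h3 h4) as SB.
  set (P n := sA nu0 A0 T0 c n + sT nu0 A0 T0 c n + sA nu0 A0 T0 c n * sA nu0 A0 T0 c n).
  set (K := 10 * c * c).
  assert (HK : 0 < K) by (unfold K; nra).
  assert (HP0 : forall n, 0 <= P n).
  { intro n. destruct (SB n) as (_ & a & t). unfold P. nra. }
  assert (Pstep : forall n, P (S n) <= K * snu nu0 A0 T0 c n * P n).
  { intro n. unfold P. destruct (sq_S nu0 A0 T0 c n) as (_ & EA & ET). rewrite EA, ET.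
    destruct (SB n) as ((Hn1 & Hn2) & HA & HT).
    set (nu := snu nu0 A0 T0 c n) in *. set (A := sA nu0 A0 T0 c n) in *. set (T := sT nu0 A0 T0 c n) in *.
    assert (nu0 ^ n <= 1) by (apply pow_le1; lra).
    assert (nu0 ^ n * nu0 <= 1 * 1) by (apply mle; try lra; apply pow_le; lra).
    assert (Hnu1 : nu <= 1) by lra.
    assert (E : 2 * c * A * nu + 2 * (c * (T + 3 * c * A * A)) * nu + 2 * c * A * nu * (2 * c * A * nu)
              = nu * (2 * c * A + 2 * c * T + 6 * (c * c) * (A * A) + 4 * (c * c) * (A * A) * nu)) by ring.
    rewrite E. unfold K.
    replace (10 * c * c * nu * (A + T + A * A)) with (nu * (10 * (c * c) * (A + T + A * A))) by ring.
    apply Rmult_le_compat_l. lra.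
    assert (1 <= c * c) by nra.
    assert (0 <= A * A) by nra.
    assert ((c * c) * (A * A) * nu <= (c * c) * (A * A) * 1) by (apply Rmult_le_compat_l; nra).
    assert (c <= c * c) by nra.
    assert (c * A <= (c * c) * A) by (apply Rmult_le_compat_r; lra).
    assert (c * T <= (c * c) * T) by (apply Rmult_le_compat_r; lra).
    assert (0 <= (c * c) * A) by (apply Rmult_le_pos; lra).
    assert (0 <= (c * c) * T) by (apply Rmult_le_pos; lra).
    assert (0 <= (c * c) * (A * A)) by (apply Rmult_le_pos; lra).
    nra. }
  destruct (pow_lt_1_zero nu0 ltac:(rewrite Rabs_right; lra) (Rmin eps (1 / (2 * K)))) as (N1 & HN1).
  { apply Rmin_pos. lra. apply Rdiv_lt_0_compat; lra. }
  assert (Hnu_small : forall n, (N1 <= n)%nat -> snu nu0 A0 T0 c n <= Rmin eps (1 / (2 * K))).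
  { intros n Hn. specialize (HN1 n Hn). rewrite Rabs_right in HN1 by (apply Rle_ge, pow_le; lra).
    destruct (SB n) as ((a1 & a2) & _). assert (nu0 ^ n * nu0 <= nu0 ^ n * 1) by (apply Rmult_le_compat_l; [apply pow_le|]; lra).
    lra. }
  assert (Pdec : forall m, P (N1 + m)%nat <= P N1 * (1 / 2) ^ m).
  { induction m. rewrite Nat.add_0_r. simpl. lra.
    replace (N1 + S m)%nat with (S (N1 + m)) by lia.
    eapply Rle_trans. apply Pstep.
    pose proof (Hnu_small (N1 + m)%nat ltac:(lia)).
    pose proof (Rmin_r eps (1 / (2 * K))).
    assert (K * snu nu0 A0 T0 c (N1 + m) <= 1 / 2).
    { assert (K * snu nu0 A0 T0 c (N1 + m) <= K * (1 / (2 * K))) by (apply Rmult_le_compat_l; lra).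
      replace (K * (1 / (2 * K))) with (1 / 2) in H1 by (field; lra). lra. }
    destruct (SB (N1 + m)%nat) as ((a1 & _) & _).
    assert (K * snu nu0 A0 T0 c (N1 + m) * P (N1 + m)%nat <= 1 / 2 * (P N1 * (1 / 2) ^ m)).
    { apply mle; auto. apply Rmult_le_pos; lra. }
    simpl. lra. }
  destruct (pow_lt_1_zero (1 / 2) ltac:(rewrite Rabs_right; lra) (eps / (P N1 + 1))) as (m0 & Hm0).
  { apply Rdiv_lt_0_compat; [lra|]. pose proof (HP0 N1). lra. }
  exists (N1 + m0)%nat. intros n Hn.
  assert (HPn : P n <= eps).
  { replace n with (N1 + (n - N1))%nat by lia. eapply Rle_trans. apply Pdec.
    specialize (Hm0 (n - N1)%nat ltac:(lia)). rewrite Rabs_right in Hm0 by (apply Rle_ge, pow_le; lra).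
    pose proof (HP0 N1).
    assert (P N1 * (1 / 2) ^ (n - N1) <= P N1 * (eps / (P N1 + 1))) by (apply Rmult_le_compat_l; lra).
    assert (P N1 * (eps / (P N1 + 1)) <= eps).
    { unfold Rdiv. rewrite <- Rmult_assoc. apply (Rmult_le_reg_r (P N1 + 1)). lra.
      rewrite Rmult_assoc, Rinv_l by lra. nra. }
    lra. }
  destruct (SB n) as (_ & a & t). unfold P in HPn.
  pose proof (Hnu_small n ltac:(lia)). pose proof (Rmin_l eps (1 / (2 * K))).
  split. lra. split; nra.
Qed.

Lemma lip (s : sm) a b M x y : Smooth s -> (forall t, a <= t <= b -> Rabs (s1 s t) <= M) ->
  a <= x <= b -> a <= y <= b -> Rabs (s0 s x - s0 s y) <= M * Rabs (x - y).
Proof.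
  intros (d1 & _) HB Hx Hy.
  destruct (MVT_gen (s0 s) y x (s1 s)) as (t & Ht & E).
  - intros; apply d1.
  - intros; apply continuity_pt_filterlim. exact (dcont _ _ _ (d1 x0)).
  - rewrite E, Rabs_mult. apply Rmult_le_compat_r. apply Rabs_pos. apply HB.
    destruct Ht as (Ht1 & Ht2).
    pose proof (Rmin_glb_lt a x y). pose proof (Rmax_lub x y b).
    split. apply Rle_trans with (Rmin y x); auto. apply Rmin_glb; lra.
    apply Rle_trans with (Rmax y x); auto. apply Rmax_lub; lra.
Qed.

Definition affg (s b : R) (x : R) : R := if Rlt_dec x 0 then s * x + b else s * x + b - 1.

Lemma affg_l s b x : x < 0 -> affg s b x = s * x + b.
Proof. intros H. unfold affg. destruct (Rlt_dec x 0); auto. lra. Qed.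
Lemma affg_r s b x : 0 < x -> affg s b x = s * x + b - 1.
Proof. intros H. unfold affg. destruct (Rlt_dec x 0); auto. lra. Qed.

Lemma affg_gap s b : 0 < s < 1 -> 0 < b < 1 -> affine_gap_map (affg s b) b.
Proof.
  intros Hs Hb. split.
  - split; [exact Hb|]. split; [|split; [|split; [|split; [|split; [|split; [|split]]]]]].
    + intros x Hx eps He. exists (eps / (s + 1)). split. apply Rdiv_lt_0_compat; lra.
      intros y Hy Hxy. unfold left_branch in *. rewrite !affg_l by lra.
      replace (s * y + b - (s * x + b)) with (s * (y - x)) by ring. rewrite Rabs_mult, Rabs_right by lra.
      apply Rlt_le_trans with (s * (eps / (s + 1))). apply Rmult_lt_compat_l; lra.
      apply (Rmult_le_reg_r (s + 1)). lra. field_simplify; nra.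
    + intros x Hx eps He. exists (eps / (s + 1)). split. apply Rdiv_lt_0_compat; lra.
      intros y Hy Hxy. unfold right_branch in *. rewrite !affg_r by lra.
      replace (s * y + b - 1 - (s * x + b - 1)) with (s * (y - x)) by ring. rewrite Rabs_mult, Rabs_right by lra.
      apply Rlt_le_trans with (s * (eps / (s + 1))). apply Rmult_lt_compat_l; lra.
      apply (Rmult_le_reg_r (s + 1)). lra. field_simplify; nra.
    + intros x y Hx Hy Hxy. unfold left_branch in *. rewrite !affg_l by lra. nra.
    + intros x y Hx Hy Hxy. unfold right_branch in *. rewrite !affg_r by lra. nra.
    + intros P (eps & HP). exists (mkposreal _ (Rdiv_lt_0_compat eps (s + 1) (cond_pos eps) ltac:(lra))).
      intros y Hy Hy0. apply HP. change (Rabs (affg s b y - b) < eps). change (Rabs (y - 0) < eps / (s + 1)) in Hy.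
      rewrite affg_l by lra. replace (s * y + b - b) with (s * (y - 0)) by ring. rewrite Rabs_mult, Rabs_right by lra.
      pose proof (cond_pos eps).
      apply Rlt_le_trans with (s * (eps / (s + 1))). apply Rmult_lt_compat_l; lra.
      apply (Rmult_le_reg_r (s + 1)). lra. field_simplify; nra.
    + intros P (eps & HP). exists (mkposreal _ (Rdiv_lt_0_compat eps (s + 1) (cond_pos eps) ltac:(lra))).
      intros y Hy Hy0. apply HP. change (Rabs (affg s b y - (b - 1)) < eps). change (Rabs (y - 0) < eps / (s + 1)) in Hy.
      rewrite affg_r by lra. replace (s * y + b - 1 - (b - 1)) with (s * (y - 0)) by ring. rewrite Rabs_mult, Rabs_right by lra.
      pose proof (cond_pos eps).
      apply Rlt_le_trans with (s * (eps / (s + 1))). apply Rmult_lt_compat_l; lra.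
      apply (Rmult_le_reg_r (s + 1)). lra. field_simplify; nra.
    + rewrite (affg_l s b (b - 1)), (affg_r s b b) by lra. nra.
    + intros x Hx Hx0. destruct (Rlt_dec x 0).
      * rewrite affg_l by lra. nra.
      * rewrite affg_r by lra. nra.
  - exists s, b, s, (b - 1). split.
    + intros x Hx. unfold left_branch in Hx. apply affg_l. lra.
    + intros x Hx. unfold right_branch in Hx. rewrite affg_r by lra. ring.
Qed.

Definition subaff (F : sm) (s c : R) : sm :=
  mksm (fun x => s0 F x - (s * x + c)) (fun x => s1 F x - s) (s2 F) (s3 F).

Lemma Smooth_subaff F s c : Smooth F -> Smooth (subaff F s c).
Proof.
  intros (d1 & d2 & d3 & d4). unfold Smooth, subaff; simpl. split; [|split; [|split]]; intro x; auto.
  - eapply dext; [intro; reflexivity| |].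
    2:{ apply (is_derive_minus (s0 F) (fun x => s * x + c)). apply d1.
        eapply dext; [intro; reflexivity| |apply dplus; [apply dmult; [apply dconst|apply did]|apply dconst]]. reflexivity. }
    simpl. unfold minus, plus, opp; simpl. ring.
  - eapply dext; [intro; reflexivity| |].
    2:{ apply (is_derive_minus (s1 F) (fun _ => s)). apply d2. apply dconst. }
    simpl. unfold minus, plus, opp; simpl. ring.
Qed.

Lemma approx f b nu A T eps : Good f b nu A T -> 0 < eps -> 0 <= nu <= eps / 2 -> A <= eps -> T <= eps ->
  exists g, affine_gap_map g b /\ C3_dist_le f g b eps.
Proof.
  intros HG He Hnu HA HT.
  destruct HG as (Hb & FL & FR & SL & SR & EL & ER & FL0 & FR0 & ML & MR & Lb & Rb & Gap & BL & BR).
  set (s := Rmin (eps / 2) (1 / 2)).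
  assert (Hs : 0 < s <= eps / 2 /\ s < 1).
  { unfold s. split; [split|]. apply Rmin_pos; lra. apply Rmin_l. pose proof (Rmin_r (eps / 2) (1 / 2)). lra. }
  exists (affg s b). split. apply affg_gap; lra.
  pose proof (Smooth_subaff FL s b SL) as SHL. pose proof (Smooth_subaff FR s (b - 1) SR) as SHR.
  exists (s0 (subaff FL s b)), (s0 (subaff FR s (b - 1))).
  split; [apply Smooth_C3; auto|]. split; [apply Smooth_C3; auto|].
  split; [|split; [|split]].
  - intros x Hx. unfold left_branch in Hx. simpl. rewrite affg_l by lra. rewrite EL by lra. reflexivity.
  - intros x Hx. unfold right_branch in Hx. simpl. rewrite affg_r by lra. rewrite ER by lra. ring.
  - intros j x Hj Hx. destruct (BL x Hx) as (b1 & b2 & b3).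
    destruct j as [|[|[|[|j]]]].
    + simpl. replace (s0 FL x - (s * x + b)) with ((s0 FL x - s0 FL 0) - s * x) by (rewrite FL0; ring).
      pose proof (lip FL (b - 1) 0 nu x 0 SL ltac:(intros t Ht; apply (BL t Ht)) Hx ltac:(lra)).
      eapply Rle_trans. apply Rabs_triang. rewrite Rabs_Ropp, Rabs_mult, (Rabs_right s) by lra.
      rewrite Rminus_0_r in H. assert (Rabs x <= 1) by (rewrite Rabs_left1; lra).
      assert (nu * Rabs x <= nu * 1) by (apply Rmult_le_compat_l; lra).
      assert (s * Rabs x <= s * 1) by (apply Rmult_le_compat_l; lra). lra.
    + rewrite (Smooth_D1 _ SHL). simpl. eapply Rle_trans. apply Rabs_triang.
      rewrite Rabs_Ropp, (Rabs_right s) by lra. lra.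
    + rewrite (Smooth_D2 _ SHL). simpl. lra.
    + rewrite (Smooth_D3 _ SHL). simpl. lra.
    + lia.
  - intros j x Hj Hx. destruct (BR x Hx) as (b1 & b2 & b3).
    destruct j as [|[|[|[|j]]]].
    + simpl. replace (s0 FR x - (s * x + (b - 1))) with ((s0 FR x - s0 FR 0) - s * x) by (rewrite FR0; ring).
      pose proof (lip FR 0 b nu x 0 SR ltac:(intros t Ht; apply (BR t Ht)) Hx ltac:(lra)).
      eapply Rle_trans. apply Rabs_triang. rewrite Rabs_Ropp, Rabs_mult, (Rabs_right s) by lra.
      rewrite Rminus_0_r in H. assert (Rabs x <= 1) by (rewrite Rabs_right; lra).
      assert (nu * Rabs x <= nu * 1) by (apply Rmult_le_compat_l; lra).
      assert (s * Rabs x <= s * 1) by (apply Rmult_le_compat_l; lra). lra.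
    + rewrite (Smooth_D1 _ SHR). simpl. eapply Rle_trans. apply Rabs_triang.
      rewrite Rabs_Ropp, (Rabs_right s) by lra. lra.
    + rewrite (Smooth_D2 _ SHR). simpl. lra.
    + rewrite (Smooth_D3 _ SHR). simpl. lra.
    + lia.
Qed.

Theorem mainTheorem4 (f : R -> R) (b : R)
  (Hf : C3_dissipative_gap_map f b)
  (F : nat -> R -> R) (B : nat -> R)
  (HF0 : F O = f) (HB0 : B O = b)
  (Hren : forall n : nat, is_renormalization (F n) (B n) (F (S n)) (B (S n))) :
  forall eps : R, 0 < eps ->
  exists n0 : nat, forall n : nat, (n0 <= n)%nat ->
    exists g : R -> R, affine_gap_map g (B n) /\ C3_dist_le (F n) g (B n) eps.
Proof.
  intros eps He.
  destruct (level0 f b Hf) as (nu0 & A0 & T0 & Hnu0 & HA0 & HT0 & HG0).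
  set (c := 1 / (1 - nu0)).
  assert (Hc : 1 <= c /\ c * (1 - nu0) = 1).
  { unfold c. split. apply (Rmult_le_reg_r (1 - nu0)). lra. field_simplify; lra. field. lra. }
  pose proof (sq_bounds nu0 A0 T0 c ltac:(lra) HA0 HT0 (proj1 Hc)) as SB.
  assert (HGn : forall n, Good (F n) (B n) (snu nu0 A0 T0 c n) (sA nu0 A0 T0 c n) (sT nu0 A0 T0 c n)).
  { induction n.
    - destruct (sq_0 nu0 A0 T0 c) as (-> & -> & ->). rewrite HF0, HB0. exact HG0.
    - destruct (sq_S nu0 A0 T0 c n) as (-> & -> & ->).
      destruct (SB n) as ((n1 & n2) & a & t).
      assert (nu0 ^ n <= 1) by (apply pow_le1; lra).
      assert (nu0 ^ n * nu0 <= 1 * nu0) by (apply Rmult_le_compat_r; lra).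
      assert (Hcn : 1 <= c * (1 - snu nu0 A0 T0 c n)).
      { destruct Hc as (Hc1 & Hc2). rewrite <- Hc2. apply Rmult_le_compat_l; lra. }
      destruct (Hren n) as (k & [|] & (Hrt & _) & Hrest); simpl in Hrest;
        destruct Hrest as (Hlh & Hb' & Hret).
      + apply (step_left (F n) (B n) _ _ _ c (F (S n)) (B (S n)) k _ _ IHn ltac:(lra) a t (proj1 Hc) Hcn Hrt eq_refl eq_refl Hlh Hb' Hret).
      + apply (step_right (F n) (B n) _ _ _ c (F (S n)) (B (S n)) k _ _ IHn ltac:(lra) a t (proj1 Hc) Hcn Hrt eq_refl eq_refl Hlh Hb' Hret). }
  destruct (sq_small nu0 A0 T0 c ltac:(lra) HA0 HT0 (proj1 Hc) (eps / 2) ltac:(lra)) as (N & HN).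
  exists N. intros n Hn. destruct (HN n Hn) as (h1 & h2 & h3).
  destruct (SB n) as ((n1 & _) & _).
  apply (approx _ _ (snu nu0 A0 T0 c n) (sA nu0 A0 T0 c n) (sT nu0 A0 T0 c n)); auto; lra.
Qed.
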